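(* Let $X_n\subset\mathbb{R}^2$ ($n\in\mathbb{N}$) be closed sets converging in the Painlevé–Kuratowski sense to a nonempty set $X\subset\mathbb{R}^2$. Then the Clarke subdifferentials $\partial\,\mathrm{dist}^2_{X_n}$ tend graphically to $\partial\,\mathrm{dist}^2_X$.
   Context: For a nonempty set $A\subset\mathbb{R}^p$, $\mathrm{dist}_A(a)=\inf\{|x-a|:x\in A\}$ (Euclidean norm) and $\mathrm{dist}^2_A=(\mathrm{dist}_A)^2$, a locally Lipschitz function. For a locally Lipschitz $g\colon\mathbb{R}^p\to\mathbb{R}$ the Clarke subdifferential is $\partial g(x):=\mathrm{conv}\{\lim_{\nu} g'(x_\nu)\mid x_\nu\notin Z,\ x_\nu\to x,\ (g'(x_\nu))_\nu\text{ convergent}\}$, $Z$ being a null set containing the non-differentiability points of $g$. For subsets $A_n$ of a metric space $M$, $\liminf A_n$ is the set of limits of sequences $x_n\in A_n$, $\limsup A_n$ is the set of limits of sequences $x_{n_k}\in A_{n_k}$ along some $n_1<n_2<\dots$, and $A_n\to A$ in the Painlevé–Kuratowski sense if both equal $A$. A sequence of multifunctions $F_n\colon\mathbb{R}^2\rightrightarrows Y$ tends graphically to $F$ if the graphs $\Gamma_{F_n}=\{(x,y):y\in F_n(x)\}$ converge to $\Gamma_F$ in the Painlevé–Kuratowski sense. *)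

(* Defs.v *)
From Stdlib Require Import Reals Lra.
From Coquelicot Require Import Coquelicot.
Open Scope R_scope.

Definition pt : Type := (R * R)%type.
Definition padd (p q : pt) : pt := (fst p + fst q, snd p + snd q).
Definition psub (p q : pt) : pt := (fst p - fst q, snd p - snd q).
Definition norm2 (p : pt) : R := sqrt (fst p ^ 2 + snd p ^ 2).
Definition dot (p q : pt) : R := fst p * fst q + snd p * snd q.

Definition cvg_pt (u : nat -> pt) (x : pt) : Prop :=
  forall eps, 0 < eps -> exists N, forall n, (N <= n)%nat -> norm2 (psub (u n) x) < eps.

Definition cvg_pp (u : nat -> pt * pt) (z : pt * pt) : Prop :=
  cvg_pt (fun n => fst (u n)) (fst z) /\ cvg_pt (fun n => snd (u n)) (snd z).

Definition closed_pt (A : pt -> Prop) : Prop :=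
  forall x, ~ A x -> exists eps, 0 < eps /\
    forall y, norm2 (psub y x) < eps -> ~ A y.

Definition liminf_set {M : Type} (cv : (nat -> M) -> M -> Prop)
  (A : nat -> M -> Prop) : M -> Prop :=
  fun x => exists u : nat -> M, (forall n, A n (u n)) /\ cv u x.

Definition limsup_set {M : Type} (cv : (nat -> M) -> M -> Prop)
  (A : nat -> M -> Prop) : M -> Prop :=
  fun x => exists (phi : nat -> nat) (u : nat -> M),
    (forall k, (phi k < phi (S k))%nat) /\
    (forall k, A (phi k) (u k)) /\ cv u x.

Definition PK_conv {M : Type} (cv : (nat -> M) -> M -> Prop)
  (A : nat -> M -> Prop) (B : M -> Prop) : Prop :=
  (forall x, liminf_set cv A x <-> B x) /\ (forall x, limsup_set cv A x <-> B x).

Definition dist_set (A : pt -> Prop) (a : pt) : R :=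
  real (Glb_Rbar (fun r => exists x, A x /\ r = norm2 (psub x a))).
Definition dist2_set (A : pt -> Prop) (a : pt) : R := (dist_set A a) ^ 2.

Definition has_grad (g : pt -> R) (x v : pt) : Prop :=
  forall eps, 0 < eps -> exists delta, 0 < delta /\
    forall h, norm2 h < delta ->
      Rabs (g (padd x h) - g x - dot v h) <= eps * norm2 h.

Definition clarke_gen (g : pt -> R) (x : pt) : pt -> Prop :=
  fun y => exists xs vs : nat -> pt,
    (forall n, has_grad g (xs n) (vs n)) /\ cvg_pt xs x /\ cvg_pt vs y.

Definition conv_hull (S : pt -> Prop) : pt -> Prop :=
  fun y => exists (n : nat) (l : nat -> R) (p : nat -> pt),
    (forall i, (i <= n)%nat -> 0 <= l i /\ S (p i)) /\
    sum_f_R0 l n = 1 /\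
    y = (sum_f_R0 (fun i => l i * fst (p i)) n,
         sum_f_R0 (fun i => l i * snd (p i)) n).

Definition clarke_subdiff (g : pt -> R) (x : pt) : pt -> Prop :=
  conv_hull (clarke_gen g x).

Definition graph (F : pt -> pt -> Prop) : pt * pt -> Prop :=
  fun z => F (fst z) (snd z).

(* Main.v *)
Require Import Defs.
From Stdlib Require Import Reals Lra Psatz ClassicalEpsilon Classical Lia ZArith.
From Coquelicot Require Import Coquelicot.
Open Scope R_scope.


Definition ns (p : pt) : R := fst p * fst p + snd p * snd p.
Definition pscal (a : R) (p : pt) : pt := (a * fst p, a * snd p).

Ltac pteq := repeat match goal with p : pt |- _ => destruct p end;
  unfold psub, padd, pscal in *; simpl in *; f_equal; ring.

Lemma ns_ge0 p : 0 <= ns p.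
Proof. unfold ns; nra. Qed.

Lemma norm2_sq p : norm2 p * norm2 p = ns p.
Proof. unfold norm2, ns. rewrite sqrt_sqrt; [simpl; ring | simpl; nra]. Qed.

Lemma norm2_ge0 p : 0 <= norm2 p.
Proof. apply sqrt_pos. Qed.

Lemma norm2_le p r : 0 <= r -> ns p <= r * r -> norm2 p <= r.
Proof. intros. pose proof (norm2_sq p). pose proof (norm2_ge0 p). nra. Qed.

Lemma norm2_lt p r : 0 <= r -> ns p < r * r -> norm2 p < r.
Proof. intros. pose proof (norm2_sq p). pose proof (norm2_ge0 p). nra. Qed.

Lemma norm2_0 : norm2 (0,0) = 0.
Proof. unfold norm2; simpl. replace (0*(0*1)+0*(0*1)) with 0 by ring. apply sqrt_0. Qed.

Lemma abs_fst p : Rabs (fst p) <= norm2 p.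
Proof. pose proof (norm2_sq p). pose proof (norm2_ge0 p). unfold ns in H.
  unfold Rabs; destruct Rcase_abs; nra. Qed.
Lemma abs_snd p : Rabs (snd p) <= norm2 p.
Proof. pose proof (norm2_sq p). pose proof (norm2_ge0 p). unfold ns in H.
  unfold Rabs; destruct Rcase_abs; nra. Qed.
Lemma norm2_comp p : norm2 p <= Rabs (fst p) + Rabs (snd p).
Proof. apply norm2_le. pose proof (Rabs_pos (fst p)); pose proof (Rabs_pos (snd p)); lra.
  unfold ns. pose proof (Rsqr_abs (fst p)); pose proof (Rsqr_abs (snd p)). unfold Rsqr in *.
  pose proof (Rabs_pos (fst p)); pose proof (Rabs_pos (snd p)); nra. Qed.

Lemma cs p q : Rabs (dot p q) <= norm2 p * norm2 q.
Proof.
  pose proof (norm2_sq p); pose proof (norm2_sq q); pose proof (norm2_ge0 p); pose proof (norm2_ge0 q).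
  assert (dot p q * dot p q <= (norm2 p * norm2 q) * (norm2 p * norm2 q)).
  { replace ((norm2 p * norm2 q) * (norm2 p * norm2 q)) with (ns p * ns q) by nra.
    unfold dot, ns. 
    assert (0 <= (fst p * snd q - snd p * fst q) * (fst p * snd q - snd p * fst q)) by apply Rle_0_sqr.
    lra. }
  assert (0 <= norm2 p * norm2 q) by nra.
  unfold Rabs; destruct Rcase_abs; nra.
Qed.

Lemma dot_le p q : dot p q <= norm2 p * norm2 q.
Proof. pose proof (cs p q). unfold Rabs in H; destruct Rcase_abs; lra. Qed.

Lemma ns_padd p q : ns (padd p q) = ns p + 2 * dot p q + ns q.
Proof. unfold ns, padd, dot; simpl; ring. Qed.

Lemma norm2_tri p q : norm2 (padd p q) <= norm2 p + norm2 q.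
Proof. apply norm2_le. pose proof (norm2_ge0 p); pose proof (norm2_ge0 q); lra.
  rewrite ns_padd. pose proof (dot_le p q). pose proof (norm2_sq p); pose proof (norm2_sq q). nra. Qed.

Lemma norm2_tri3 a b c : norm2 (psub a c) <= norm2 (psub a b) + norm2 (psub b c).
Proof. replace (psub a c) with (padd (psub a b) (psub b c)) by pteq. apply norm2_tri. Qed.

Lemma norm2_sym a b : norm2 (psub a b) = norm2 (psub b a).
Proof. unfold norm2, psub; simpl; f_equal; ring. Qed.

Lemma norm2_scal a p : norm2 (pscal a p) = Rabs a * norm2 p.
Proof. unfold norm2, pscal; simpl.
  replace ((a * fst p) * ((a * fst p) * 1) + (a * snd p) * ((a * snd p) * 1))
    with ((a*a) * (fst p * (fst p * 1) + snd p * (snd p * 1))) by ring.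
  rewrite sqrt_mult; [| nra | nra]. f_equal. 
  apply (sqrt_Rsqr_abs a). Qed.

Lemma norm2_sub_norm a b : norm2 a <= norm2 b + norm2 (psub a b).
Proof. replace a with (padd b (psub a b)) at 1 by pteq. apply norm2_tri. Qed.

Definition incr (phi : nat -> nat) := forall k, (phi k < phi (S k))%nat.

Lemma incr_lt phi : incr phi -> forall a b, (a < b)%nat -> (phi a < phi b)%nat.
Proof. intros H a b Hab. induction Hab. apply H. specialize (H m). lia. Qed.
Lemma incr_ge phi : incr phi -> forall k, (k <= phi k)%nat.
Proof. intros H k. induction k. lia. specialize (H k). lia. Qed.
Lemma incr_comp phi psi : incr phi -> incr psi -> incr (fun k => phi (psi k)).
Proof. intros H1 H2 k. apply incr_lt; auto. Qed.
Lemma incr_id : incr (fun k => k).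
Proof. intro; lia. Qed.

Lemma lim_sub (u : nat -> R) (l : R) phi : incr phi -> is_lim_seq u l -> is_lim_seq (fun k => u (phi k)) l.
Proof. intros. apply is_lim_seq_subseq; auto. apply eventually_subseq; auto. Qed.

Lemma cvg_pt_sub (u : nat -> pt) (x : pt) phi : incr phi -> cvg_pt u x -> cvg_pt (fun k => u (phi k)) x.
Proof. intros Hp H eps He. destruct (H eps He) as [N HN]. exists N. intros n Hn.
  apply HN. pose proof (incr_ge phi Hp n). lia. Qed.

Lemma cvg_pt_fst (u : nat -> pt) (x : pt) : cvg_pt u x -> is_lim_seq (fun n => fst (u n)) (fst x).
Proof. intros H. apply is_lim_seq_spec. intros eps. destruct (H eps (cond_pos eps)) as [N HN].
  exists N. intros n Hn. specialize (HN n Hn). pose proof (abs_fst (psub (u n) x)).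
  simpl in H0. lra. Qed.
Lemma cvg_pt_snd (u : nat -> pt) (x : pt) : cvg_pt u x -> is_lim_seq (fun n => snd (u n)) (snd x).
Proof. intros H. apply is_lim_seq_spec. intros eps. destruct (H eps (cond_pos eps)) as [N HN].
  exists N. intros n Hn. specialize (HN n Hn). pose proof (abs_snd (psub (u n) x)).
  simpl in H0. lra. Qed.
Lemma cvg_pt_comp (u : nat -> pt) (x : pt) : is_lim_seq (fun n => fst (u n)) (fst x) ->
  is_lim_seq (fun n => snd (u n)) (snd x) -> cvg_pt u x.
Proof. intros H1 H2 eps He. apply is_lim_seq_spec in H1, H2.
  destruct (H1 (mkposreal (eps/2) ltac:(lra))) as [N1 HN1].
  destruct (H2 (mkposreal (eps/2) ltac:(lra))) as [N2 HN2]. simpl in *.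
  exists (N1 + N2)%nat. intros n Hn.
  specialize (HN1 n ltac:(lia)). specialize (HN2 n ltac:(lia)).
  pose proof (norm2_comp (psub (u n) x)). simpl in H. lra. Qed.

Lemma cvg_pt_iff (u : nat -> pt) (x : pt) : cvg_pt u x <-> is_lim_seq (fun n => norm2 (psub (u n) x)) 0.
Proof. split; intros H.
  - apply is_lim_seq_spec. intros eps. destruct (H eps (cond_pos eps)) as [N HN].
    exists N. intros n Hn. specialize (HN n Hn). rewrite Rminus_0_r, Rabs_pos_eq; auto. apply norm2_ge0.
  - intros eps He. apply is_lim_seq_spec in H. destruct (H (mkposreal eps He)) as [N HN].
    exists N. intros n Hn. specialize (HN n Hn). simpl in HN. rewrite Rminus_0_r, Rabs_pos_eq in HN; auto. apply norm2_ge0.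
Qed.

Lemma cvg_pt_const x : cvg_pt (fun _ => x) x.
Proof. intros eps He. exists O. intros. replace (psub x x) with (0,0) by pteq. rewrite norm2_0; auto. Qed.

Fixpoint mkseq (sel : nat -> nat -> nat) (k : nat) : nat :=
  match k with O => sel O O | S k' => sel (S k') (S (mkseq sel k')) end.

Lemma infseq (Q : nat -> nat -> Prop) :
  (forall k N, exists n, (N <= n)%nat /\ Q k n) ->
  exists phi, incr phi /\ forall k, Q k (phi k).
Proof. intros H.
  assert (H' : forall kN : nat * nat, exists n, (snd kN <= n)%nat /\ Q (fst kN) n).
  { intros [k N]; apply H. }
  destruct (choice _ H') as [f Hf].
  exists (mkseq (fun k N => f (k, N))). split.
  - intros k. simpl. destruct (Hf (S k, S (mkseq (fun k N => f (k,N)) k))) as [A _]. simpl in A. lia.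
  - intros k. destruct k; simpl.
    + exact (proj2 (Hf (O,O))).
    + exact (proj2 (Hf (S k, _))).
Qed.

Lemma small_inv eps : 0 < eps -> exists N : nat, / (INR N + 1) < eps.
Proof. intros He. destruct (archimed (/eps)) as [A _].
  assert (0 < /eps) by (apply Rinv_0_lt_compat; auto).
  assert (Hz : (0 <= up (/eps))%Z). { apply le_IZR. lra. }
  exists (Z.to_nat (up (/eps))). rewrite INR_IZR_INZ, Z2Nat.id; auto.
  assert (/ (IZR (up (/eps)) + 1) < / (/ eps)).
  { apply Rinv_lt_contravar. apply Rmult_lt_0_compat; lra. lra. }
  rewrite Rinv_inv in H0. exact H0. Qed.

Lemma lim_inv_bound (u : nat -> R) (l : R) : (forall k, Rabs (u k - l) <= / (INR k + 1)) -> is_lim_seq u l.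
Proof. intros H. apply is_lim_seq_spec. intros eps. destruct (small_inv eps (cond_pos eps)) as [N HN].
  exists N. intros n Hn. eapply Rle_lt_trans. apply H. eapply Rle_lt_trans; [|apply HN].
  apply Rinv_le_contravar. pose proof (pos_INR N); lra. apply le_INR in Hn. lra. Qed.

Lemma bwR (u : nat -> R) M : (forall n, Rabs (u n) <= M) -> exists phi (l : R), incr phi /\ is_lim_seq (fun k => u (phi k)) l.
Proof. intros H.
  destruct (Bolzano_Weierstrass u (fun c => -M <= c <= M) (compact_P3 (-M) M)) as [l Hl].
  { intros n. specialize (H n). unfold Rabs in H; destruct Rcase_abs; lra. }
  destruct (infseq (fun k n => Rabs (u n - l) < / (INR k + 1))) as [phi [Hp Hq]].
  { intros k N. assert (Hpos : 0 < / (INR k + 1)). { apply Rinv_0_lt_compat. pose proof (pos_INR k); lra. }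
    destruct (Hl (fun y => Rabs (y - l) < / (INR k + 1)) N) as [p [Hp1 Hp2]].
    { exists (mkposreal _ Hpos). intros y Hy. unfold disc in Hy. simpl in Hy. auto. }
    exists p; auto. }
  exists phi, l. split; auto. apply lim_inv_bound. intros; left; auto. Qed.

Lemma bw (u : nat -> pt) M : (forall n, norm2 (u n) <= M) -> exists phi (c : pt), incr phi /\ cvg_pt (fun k => u (phi k)) c.
Proof. intros H.
  destruct (bwR (fun n => fst (u n)) M) as [phi1 [l1 [H1 L1]]].
  { intros n. eapply Rle_trans. apply abs_fst. auto. }
  destruct (bwR (fun k => snd (u (phi1 k))) M) as [phi2 [l2 [H2 L2]]].
  { intros n. eapply Rle_trans. apply abs_snd. auto. }
  exists (fun k => phi1 (phi2 k)), (l1, l2). split. apply incr_comp; auto.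
  apply cvg_pt_comp; simpl; auto.
  apply (lim_sub (fun k => fst (u (phi1 k)))); auto. Qed.

Lemma lim_le (u v : nat -> R) (a b : R) : (forall n, u n <= v n) -> is_lim_seq u a -> is_lim_seq v b -> a <= b.
Proof. intros. pose proof (is_lim_seq_le u v a b H H0 H1). simpl in H2. auto. Qed.

Lemma lim_norm (u : nat -> pt) (x c : pt) : cvg_pt u x -> is_lim_seq (fun n => norm2 (psub (u n) c)) (norm2 (psub x c)).
Proof. intros H. apply cvg_pt_iff in H. apply is_lim_seq_spec. apply is_lim_seq_spec in H.
  intros eps. destruct (H eps) as [N HN]. exists N. intros n Hn. specialize (HN n Hn).
  rewrite Rminus_0_r, Rabs_pos_eq in HN by apply norm2_ge0.
  pose proof (norm2_tri3 (u n) x c). pose proof (norm2_tri3 x (u n) c). rewrite (norm2_sym x (u n)) in H1.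
  unfold Rabs; destruct Rcase_abs; lra. Qed.


Definition dset (A : pt -> Prop) (a : pt) : R -> Prop :=
  fun r => exists x, A x /\ r = norm2 (psub x a).

Lemma glb_props A a x0 : A x0 ->
  Glb_Rbar (dset A a) = Finite (dist_set A a) /\
  (forall x, A x -> dist_set A a <= norm2 (psub x a)) /\
  (forall m, (forall x, A x -> m <= norm2 (psub x a)) -> m <= dist_set A a).
Proof. intros H0. destruct (Glb_Rbar_correct (dset A a)) as [Hlb Hglb].
  assert (L0 : Rbar_le 0 (Glb_Rbar (dset A a))).
  { apply Hglb. intros r [x [_ ->]]. simpl. apply norm2_ge0. }
  assert (L1 : Rbar_le (Glb_Rbar (dset A a)) (norm2 (psub x0 a))).
  { apply Hlb. exists x0; auto. }
  change (dist_set A a) with (real (Glb_Rbar (dset A a))). destruct (Glb_Rbar (dset A a)) as [g| |] eqn:E; simpl in L0, L1; try contradiction.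
  simpl. split; auto. split.
  - intros x Hx. specialize (Hlb (norm2 (psub x a)) (ex_intro _ x (conj Hx eq_refl))).
    simpl in Hlb. auto.
  - intros m Hm. assert (Rbar_le m (Finite g)). { apply Hglb. intros r [x [Hx ->]]. simpl. auto. }
    simpl in H. auto.
Qed.

Lemma dist_le A a x : A x -> dist_set A a <= norm2 (psub x a).
Proof. intros H. apply (glb_props A a x H); auto. Qed.
Lemma dist_glb A a x0 m : A x0 -> (forall x, A x -> m <= norm2 (psub x a)) -> m <= dist_set A a.
Proof. intros H. apply (glb_props A a x0 H). Qed.
Lemma dist_ge0 A a x0 : A x0 -> 0 <= dist_set A a.
Proof. intros H. apply (dist_glb A a x0); auto. intros; apply norm2_ge0. Qed.
Lemma dist_approx A a x0 eps : A x0 -> 0 < eps -> exists x, A x /\ norm2 (psub x a) < dist_set A a + eps.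
Proof. intros H He. apply NNPP. intros Hn.
  assert (dist_set A a + eps <= dist_set A a).
  { apply (dist_glb A a x0); auto. intros x Hx. apply Rnot_lt_le. intros Hl. apply Hn. exists x; auto. }
  lra. Qed.
Lemma dist_lip A a b x0 : A x0 -> dist_set A a <= dist_set A b + norm2 (psub a b).
Proof. intros H. cut (dist_set A a - norm2 (psub a b) <= dist_set A b). lra.
  apply (dist_glb A b x0); auto. intros x Hx. pose proof (dist_le A a x Hx).
  pose proof (norm2_tri3 x b a). rewrite (norm2_sym b a) in H1. lra. Qed.
Lemma dist_lip_abs A a b x0 : A x0 -> Rabs (dist_set A a - dist_set A b) <= norm2 (psub a b).
Proof. intros H. pose proof (dist_lip A a b x0 H). pose proof (dist_lip A b a x0 H).
  rewrite norm2_sym in H1. unfold Rabs; destruct Rcase_abs; lra. Qed.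

Lemma D_eq A a : dist2_set A a = dist_set A a * dist_set A a.
Proof. unfold dist2_set. ring. Qed.

Lemma ns_norm p : ns p = norm2 p * norm2 p.
Proof. rewrite norm2_sq; auto. Qed.

Lemma D_le A a x : A x -> dist2_set A a <= ns (psub x a).
Proof. intros H. rewrite D_eq, ns_norm. pose proof (dist_le A a x H). 
  pose proof (dist_ge0 A a x H). nra. Qed.
Lemma D_ge0 A a x0 : A x0 -> 0 <= dist2_set A a.
Proof. intros H. rewrite D_eq. pose proof (dist_ge0 A a x0 H). nra. Qed.
Lemma D_glb A a x0 K : A x0 -> (forall x, A x -> K <= ns (psub x a)) -> K <= dist2_set A a.
Proof. intros H HK. destruct (Rle_dec K 0). pose proof (D_ge0 A a x0 H); lra. apply Rnot_le_lt in n.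
  assert (sqrt K <= dist_set A a).
  { apply (dist_glb A a x0); auto. intros x Hx. specialize (HK x Hx). rewrite ns_norm in HK.
    pose proof (sqrt_sqrt K ltac:(lra)). pose proof (sqrt_pos K). pose proof (norm2_ge0 (psub x a)). nra. }
  rewrite D_eq. pose proof (sqrt_sqrt K ltac:(lra)). pose proof (sqrt_pos K). nra. Qed.
Lemma D_approx A a x0 eta : A x0 -> 0 < eta -> exists x, A x /\ ns (psub x a) < dist2_set A a + eta.
Proof. intros H He. pose proof (dist_ge0 A a x0 H) as Hd.
  assert (K: forall eps, 0 < eps -> exists x, A x /\ norm2 (psub x a) < dist_set A a + eps)
    by (intros; apply (dist_approx A a x0); auto).
  rewrite D_eq. remember (dist_set A a) as d. clear Heqd.
  assert (Heps : 0 < Rmin 1 (eta / (2 * d + 1))). { apply Rmin_glb_lt. lra. apply Rdiv_lt_0_compat; lra. }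
  assert (E1 : Rmin 1 (eta / (2 * d + 1)) <= 1) by apply Rmin_l.
  assert (E2 : Rmin 1 (eta / (2 * d + 1)) * (2 * d + 1) <= eta).
  { assert (Rmin 1 (eta / (2 * d + 1)) <= eta / (2*d+1)) by apply Rmin_r. apply (Rmult_le_compat_r (2*d+1)) in H0; [|lra].
    unfold Rdiv in H0. rewrite Rmult_assoc, Rinv_l in H0; lra. }
  remember (Rmin 1 (eta / (2 * d + 1))) as eps. clear Heqeps.
  destruct (K eps Heps) as [x [Hx Hl]]. exists x; split; auto.
  rewrite ns_norm. pose proof (norm2_ge0 (psub x a)). nra. Qed.

Definition phiA (A : pt -> Prop) (z : pt) : R := ns z - dist2_set A z.
Definition dot_ns_expand := 0.

Lemma phi_ge A z a : A a -> 2 * dot z a - ns a <= phiA A z.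
Proof. intros H. unfold phiA. pose proof (D_le A z a H). unfold ns, dot, psub in *; simpl in *. nra. Qed.

Definition cmb (t : R) (a b : pt) : pt := padd (pscal (1 - t) a) (pscal t b).

Lemma phi_convex A x0 a b t : A x0 -> 0 <= t <= 1 ->
  phiA A (cmb t a b) <= (1 - t) * phiA A a + t * phiA A b.
Proof. intros H Ht. unfold phiA at 1.
  cut (ns (cmb t a b) - ((1 - t) * phiA A a + t * phiA A b) <= dist2_set A (cmb t a b)). lra.
  apply (D_glb _ _ x0); auto. intros x Hx.
  pose proof (phi_ge A a x Hx). pose proof (phi_ge A b x Hx).
  assert (E : ns (psub x (cmb t a b)) = ns (cmb t a b) - ((1-t) * (2 * dot a x - ns x) + t * (2 * dot b x - ns x))).
  { unfold ns, dot, psub, cmb, padd, pscal; simpl; ring. }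
  rewrite E. nra. Qed.

Lemma lim_dist A x0 (u : nat -> pt) c : A x0 -> cvg_pt u c ->
  is_lim_seq (fun n => dist_set A (u n)) (dist_set A c).
Proof. intros H Hc. apply cvg_pt_iff in Hc. apply is_lim_seq_spec in Hc. apply is_lim_seq_spec.
  intros eps. destruct (Hc eps) as [N HN]. exists N. intros n Hn. specialize (HN n Hn).
  rewrite Rminus_0_r, Rabs_pos_eq in HN by apply norm2_ge0.
  pose proof (dist_lip_abs A (u n) c x0 H). lra. Qed.

Lemma lim_ns (u : nat -> pt) c : cvg_pt u c -> is_lim_seq (fun n => ns (u n)) (ns c).
Proof. intros H. unfold ns. apply is_lim_seq_plus'; apply is_lim_seq_mult';
  (apply cvg_pt_fst; auto) || (apply cvg_pt_snd; auto). Qed.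

Lemma lim_dot (u v : nat -> pt) c d : cvg_pt u c -> cvg_pt v d -> is_lim_seq (fun n => dot (u n) (v n)) (dot c d).
Proof. intros H1 H2. unfold dot. apply is_lim_seq_plus'; apply is_lim_seq_mult';
  (apply cvg_pt_fst; auto) || (apply cvg_pt_snd; auto). Qed.

Lemma lim_D A x0 (u : nat -> pt) c : A x0 -> cvg_pt u c ->
  is_lim_seq (fun n => dist2_set A (u n)) (dist2_set A c).
Proof. intros H Hc. rewrite D_eq. eapply is_lim_seq_ext. intros n; symmetry; apply D_eq.
  apply is_lim_seq_mult'; apply (lim_dist A x0); auto. Qed.

Lemma lim_phi A x0 (u : nat -> pt) c : A x0 -> cvg_pt u c ->
  is_lim_seq (fun n => phiA A (u n)) (phiA A c).
Proof. intros H Hc. unfold phiA. apply is_lim_seq_minus'. apply lim_ns; auto. apply (lim_D A x0); auto. Qed.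

Definition seqcl (A : pt -> Prop) := forall (u : nat -> pt) c, (forall n, A (u n)) -> cvg_pt u c -> A c.

Lemma closed_seqcl A : closed_pt A -> seqcl A.
Proof. intros H u c Hu Hc. apply NNPP. intros Hn. destruct (H c Hn) as [eps [He Hb]].
  destruct (Hc eps He) as [N HN]. apply (Hb (u N)); auto. Qed.

Definition proj (A : pt -> Prop) (x p : pt) := A p /\ norm2 (psub p x) = dist_set A x.

Lemma proj_D A x p : proj A x p -> dist2_set A x = ns (psub p x).
Proof. intros [H1 H2]. rewrite D_eq, ns_norm, H2; auto. Qed.

Lemma projex A x x0 : A x0 -> seqcl A -> exists p, proj A x p.
Proof. intros H Hc.
  assert (forall k : nat, exists a, A a /\ norm2 (psub a x) < dist_set A x + / (INR k + 1)).
  { intros k. apply (dist_approx A x x0); auto. apply Rinv_0_lt_compat. pose proof (pos_INR k); lra. }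
  destruct (choice _ H0) as [a Ha].
  destruct (bw a (norm2 x + dist_set A x + 1)) as [phi [c [Hp Hcv]]].
  { intros n. destruct (Ha n) as [_ Hn]. pose proof (norm2_sub_norm (a n) x).
    assert (/ (INR n + 1) <= 1). { rewrite <- Rinv_1. apply Rinv_le_contravar. lra. pose proof (pos_INR n); lra. }
    lra. }
  assert (Ac : A c). { apply (Hc _ c (fun k => proj1 (Ha (phi k)))); auto. }
  exists c. split; auto. apply Rle_antisym; [| apply dist_le; auto].
  apply (lim_le (fun k => norm2 (psub (a (phi k)) x)) (fun k => dist_set A x + / (INR (phi k) + 1))).
  - intros k. left. apply Ha.
  - apply lim_norm; auto.
  - assert (L : is_lim_seq (fun k => dist_set A x + / (INR (phi k) + 1)) (dist_set A x + 0)).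
    2: { rewrite Rplus_0_r in L; exact L. }
    apply is_lim_seq_plus'. apply is_lim_seq_const.
    apply lim_inv_bound. intros k. rewrite Rminus_0_r. rewrite Rabs_pos_eq.
    2: { left; apply Rinv_0_lt_compat. pose proof (pos_INR (phi k)); lra. }
    apply Rinv_le_contravar. pose proof (pos_INR k); lra. apply Rplus_le_compat_r. apply le_INR.
    apply incr_ge; auto.
Qed.


Definition subg (f : pt -> R) (x v : pt) : Prop := forall z, f x + dot v (psub z x) <= f z.

Lemma le_eps a b : (forall e, 0 < e -> a <= b + e) -> a <= b.
Proof. intros H. apply Rnot_lt_le. intros Hl. specialize (H ((a - b)/2) ltac:(lra)). lra. Qed.

Lemma lim_eq (u : nat -> R) (a b : R) : is_lim_seq u a -> a = b -> is_lim_seq u b.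
Proof. intros H ->; auto. Qed.

Lemma diffsub A x0 z g : A x0 -> has_grad (dist2_set A) z g ->
  subg (phiA A) z (psub (pscal 2 z) g).
Proof. intros HA Hg z'. set (d := psub z' z).
  apply le_eps. intros e He.
  set (eps := e / (norm2 d + 1)).
  assert (Heps : 0 < eps). { unfold eps. pose proof (norm2_ge0 d). apply Rdiv_lt_0_compat; lra. }
  assert (Ee : eps * norm2 d <= e).
  { unfold eps. pose proof (norm2_ge0 d). unfold Rdiv. 
    assert (norm2 d * / (norm2 d + 1) <= 1).
    { apply (Rmult_le_reg_r (norm2 d + 1)). lra. rewrite Rmult_assoc, Rinv_l by lra. lra. }
    nra. }
  clearbody eps.
  destruct (Hg eps Heps) as [delta [Hd Hdel]].
  set (t := delta / (delta + 2 * norm2 d)).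
  pose proof (norm2_ge0 d) as Hnd.
  assert (Ht0 : 0 < t) by (unfold t; apply Rdiv_lt_0_compat; lra).
  assert (Ht1 : t <= 1).
  { unfold t. apply (Rmult_le_reg_r (delta + 2 * norm2 d)). lra. unfold Rdiv. rewrite Rmult_assoc, Rinv_l by lra. lra. }
  assert (Htd : t * norm2 d < delta).
  { unfold t. unfold Rdiv. rewrite Rmult_comm, <- Rmult_assoc.
    apply (Rmult_lt_reg_r (delta + 2 * norm2 d)). lra. rewrite Rmult_assoc, Rinv_l by lra. nra. }
  clearbody t.
  set (h := pscal t d).
  assert (Hh : norm2 h = t * norm2 d). { unfold h. rewrite norm2_scal, Rabs_pos_eq; lra. }
  specialize (Hdel h ltac:(lra)).
  assert (Ezh : padd z h = cmb t z z'). { unfold h, d, cmb. pteq. }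
  rewrite Ezh in Hdel.
  pose proof (phi_convex A x0 z z' t HA ltac:(lra)) as Hc.
  assert (Hr : dist2_set A (cmb t z z') - dist2_set A z - dot g h <= eps * norm2 h).
  { unfold Rabs in Hdel; destruct Rcase_abs in Hdel; lra. }
  unfold phiA in Hc |- *.
  assert (Ens : ns (cmb t z z') = ns z + 2 * dot z h + ns h). { unfold h, d. unfold ns, dot, cmb, padd, pscal, psub; simpl; ring. }
  assert (Edot : dot g h = t * dot g d). { unfold h, dot, pscal; simpl; ring. }
  assert (Edot2 : dot z h = t * dot z d). { unfold h, dot, pscal; simpl; ring. }
  assert (Edot3 : dot (psub (pscal 2 z) g) d = 2 * dot z d - dot g d). { unfold dot, psub, pscal; simpl; ring. }
  rewrite Edot3. pose proof (ns_ge0 h). rewrite Hh in Hr.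
  apply (Rmult_le_reg_l t). lra. nra.
Qed.

Lemma gradpt A x p t : proj A x p -> 0 <= t < 1 ->
  has_grad (dist2_set A) (padd p (pscal t (psub x p))) (pscal 2 (psub (padd p (pscal t (psub x p))) p)).
Proof. intros [Hp Hpd] Ht. set (z := padd p (pscal t (psub x p))).
  assert (Hgap : forall q, A q -> ns (psub p z) + (1 - t) * ns (psub p q) <= ns (psub q z)).
  { intros q Hq. pose proof (dist_le A x q Hq). rewrite <- Hpd in H.
    assert (ns (psub p x) <= ns (psub q x)).
    { rewrite !ns_norm. pose proof (norm2_ge0 (psub p x)). nra. }
    assert (E : ns (psub q z) - ns (psub p z) - (1 - t) * ns (psub p q) = t * (ns (psub q x) - ns (psub p x))).
    { unfold z, ns, psub, padd, pscal; simpl; ring. }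
    nra. }
  assert (HDz : dist2_set A z = ns (psub p z)).
  { apply Rle_antisym. apply D_le; auto. apply (D_glb A z p); auto. intros q Hq.
    pose proof (Hgap q Hq). pose proof (ns_ge0 (psub p q)). nra. }
  intros eps He. exists (eps * (1 - t)). split. nra.
  intros h Hh. set (g := pscal 2 (psub z p)).
  assert (Hup : dist2_set A (padd z h) - dist2_set A z - dot g h <= ns h).
  { pose proof (D_le A (padd z h) p Hp). rewrite HDz.
    assert (ns (psub p (padd z h)) = ns (psub p z) + dot g h + ns h).
    { unfold g, ns, dot, psub, padd, pscal; simpl; ring. }
    lra. }
  assert (Hlow : dist2_set A z + dot g h - ns h / (1 - t) <= dist2_set A (padd z h)).
  { apply (D_glb A _ p _ Hp). intros q Hq. rewrite HDz.
    pose proof (Hgap q Hq).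
    set (s := norm2 (psub q p)).
    assert (Es : ns (psub p q) = s * s). { unfold s. rewrite norm2_sym, <- ns_norm. auto. }
    assert (Hd : dot (psub q p) h <= s * norm2 h) by apply dot_le.
    assert (E : ns (psub q (padd z h)) = ns (psub q z) + dot g h - 2 * dot (psub q p) h + ns h).
    { unfold g, ns, dot, psub, padd, pscal; simpl; ring. }
    rewrite E. rewrite Es in H.
    assert (Hq2 : (1 - t) * (s * s) - 2 * s * norm2 h >= - (ns h / (1 - t))).
    { rewrite ns_norm. unfold Rdiv. 
      assert (0 < / (1 - t)) by (apply Rinv_0_lt_compat; lra).
      assert (Hi : (1 - t) * / (1 - t) = 1) by (apply Rinv_r; lra).
      assert (0 <= / (1 - t) * (((1 - t) * s - norm2 h) * ((1 - t) * s - norm2 h))).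
      { apply Rmult_le_pos. lra. apply Rle_0_sqr. }
      assert (/ (1 - t) * (((1 - t) * s - norm2 h) * ((1 - t) * s - norm2 h)) =
        (1-t)*(s*s) - 2*s*norm2 h + norm2 h * norm2 h * / (1-t)) by (field; lra).
      lra. }
    pose proof (ns_ge0 h). lra. }
  assert (Hns : ns h / (1 - t) <= eps * norm2 h).
  { rewrite ns_norm. unfold Rdiv. pose proof (norm2_ge0 h).
    apply (Rmult_le_reg_r (1 - t)). lra. rewrite Rmult_assoc, Rinv_l by lra. nra. }
  assert (Hns2 : ns h <= eps * norm2 h).
  { eapply Rle_trans; [|apply Hns]. unfold Rdiv. pose proof (ns_ge0 h).
    assert (1 <= / (1 - t)). { rewrite <- Rinv_1. apply Rinv_le_contravar; lra. } nra. }
  unfold Rabs; destruct Rcase_abs; lra.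
Qed.

Lemma cvg_pt_psub (u v : nat -> pt) x y : cvg_pt u x -> cvg_pt v y -> cvg_pt (fun n => psub (u n) (v n)) (psub x y).
Proof. intros. apply cvg_pt_comp; simpl; apply is_lim_seq_minus';
  (apply cvg_pt_fst; auto) || (apply cvg_pt_snd; auto). Qed.
Lemma cvg_pt_padd (u v : nat -> pt) x y : cvg_pt u x -> cvg_pt v y -> cvg_pt (fun n => padd (u n) (v n)) (padd x y).
Proof. intros. apply cvg_pt_comp; simpl; apply is_lim_seq_plus';
  (apply cvg_pt_fst; auto) || (apply cvg_pt_snd; auto). Qed.
Lemma cvg_pt_scal (a : nat -> R) (u : nat -> pt) (a0 : R) x : is_lim_seq a a0 -> cvg_pt u x -> cvg_pt (fun n => pscal (a n) (u n)) (pscal a0 x).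
Proof. intros. apply cvg_pt_comp; simpl; apply is_lim_seq_mult'; auto;
  (apply cvg_pt_fst; auto) || (apply cvg_pt_snd; auto). Qed.

Lemma lim_tk : is_lim_seq (fun k => 1 - / (INR k + 1)) 1.
Proof. apply lim_inv_bound. intros k. replace (1 - / (INR k + 1) - 1) with (- / (INR k + 1)) by ring.
  rewrite Rabs_Ropp, Rabs_pos_eq. lra. left; apply Rinv_0_lt_compat; pose proof (pos_INR k); lra. Qed.

Lemma gen_proj A x p : proj A x p -> clarke_gen (dist2_set A) x (pscal 2 (psub x p)).
Proof. intros Hp.
  set (t := fun k : nat => 1 - / (INR k + 1)).
  assert (Ht : forall k, 0 <= t k < 1).
  { intros k. unfold t. pose proof (pos_INR k). assert (0 < / (INR k + 1)) by (apply Rinv_0_lt_compat; lra).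
    assert (/ (INR k + 1) <= 1). { rewrite <- Rinv_1. apply Rinv_le_contravar; lra. } lra. }
  exists (fun k => padd p (pscal (t k) (psub x p))), (fun k => pscal 2 (psub (padd p (pscal (t k) (psub x p))) p)).
  assert (Hc : cvg_pt (fun k => padd p (pscal (t k) (psub x p))) x).
  { assert (E : padd p (pscal 1 (psub x p)) = x) by pteq. 
    enough (H : cvg_pt (fun k => padd p (pscal (t k) (psub x p))) (padd p (pscal 1 (psub x p))))
      by (rewrite E in H; exact H).
    apply cvg_pt_padd. apply cvg_pt_const. apply cvg_pt_scal. apply lim_tk. apply cvg_pt_const. }
  split; [|split].
  - intros n. apply gradpt; auto.
  - auto.
  - apply cvg_pt_scal. apply is_lim_seq_const. apply cvg_pt_psub; auto. apply cvg_pt_const.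
Qed.

Lemma subg_lim A x0 (xs vs : nat -> pt) x v : A x0 -> cvg_pt xs x -> cvg_pt vs v ->
  (forall n, subg (phiA A) (xs n) (vs n)) -> subg (phiA A) x v.
Proof. intros HA Hx Hv H z.
  apply (lim_le (fun n => phiA A (xs n) + dot (vs n) (psub z (xs n))) (fun _ => phiA A z)).
  - intros n; apply H.
  - apply is_lim_seq_plus'. apply (lim_phi A x0); auto. apply lim_dot; auto.
    apply cvg_pt_psub; auto. apply cvg_pt_const.
  - apply is_lim_seq_const.
Qed.

Lemma gen_subg A x0 x g : A x0 -> clarke_gen (dist2_set A) x g -> subg (phiA A) x (psub (pscal 2 x) g).
Proof. intros HA [xs [vs [Hg [Hx Hv]]]].
  apply (subg_lim A x0 xs (fun n => psub (pscal 2 (xs n)) (vs n))); auto.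
  apply cvg_pt_psub; auto. apply cvg_pt_scal; auto. apply is_lim_seq_const.
  intros n. apply (diffsub A x0); auto. Qed.

Lemma sum_lin (l : nat -> R) (p : nat -> pt) a b c n :
  sum_f_R0 (fun i => l i * (a + b * fst (p i) + c * snd (p i))) n =
  a * sum_f_R0 l n + b * sum_f_R0 (fun i => l i * fst (p i)) n + c * sum_f_R0 (fun i => l i * snd (p i)) n.
Proof. induction n; simpl. ring. rewrite IHn. ring. Qed.

Lemma scal_sum_l (l : nat -> R) c n k : sum_f_R0 l n = k -> sum_f_R0 (fun i => l i * c) n = c * k.
Proof. intros H. rewrite <- H, scal_sum. apply sum_eq. intros; ring. Qed.

Lemma key_easy A x0 x y : A x0 -> clarke_subdiff (dist2_set A) x y -> subg (phiA A) x (psub (pscal 2 x) y).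
Proof. intros HA [n [l [p [Hlp [Hs Hy]]]]] z.
  assert (Hi : forall i, (i <= n)%nat -> l i * (phiA A x + dot (psub (pscal 2 x) (p i)) (psub z x)) <= l i * phiA A z).
  { intros i Hi. destruct (Hlp i Hi) as [Hl Hg]. apply Rmult_le_compat_l; auto. apply (gen_subg A x0); auto. }
  apply sum_Rle in Hi.
  assert (E1 : sum_f_R0 (fun i => l i * phiA A z) n = phiA A z).
  { rewrite (scal_sum_l l (phiA A z) n 1 Hs). ring. }
  assert (E2 : sum_f_R0 (fun i => l i * (phiA A x + dot (psub (pscal 2 x) (p i)) (psub z x))) n =
     phiA A x + dot (psub (pscal 2 x) y) (psub z x)).
  { rewrite (sum_eq _ (fun i => l i * ((phiA A x + 2 * fst x * (fst z - fst x) + 2 * snd x * (snd z - snd x))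
        + (- (fst z - fst x)) * fst (p i) + (- (snd z - snd x)) * snd (p i)))).
    rewrite sum_lin, Hs, Hy. unfold dot, psub, pscal; simpl; ring.
    intros i _. unfold dot, psub, pscal; simpl; ring. }
  lra.
Qed.


Lemma glbR (E : R -> Prop) L r0 : E r0 -> (forall r, E r -> L <= r) ->
  exists m, (forall r, E r -> m <= r) /\ (forall e, 0 < e -> exists r, E r /\ r < m + e).
Proof. intros H0 HL. destruct (Glb_Rbar_correct E) as [Hlb Hglb].
  assert (L0 : Rbar_le L (Glb_Rbar E)) by (apply Hglb; intros r Hr; simpl; auto).
  assert (L1 : Rbar_le (Glb_Rbar E) r0) by (apply Hlb; auto).
  destruct (Glb_Rbar E) as [g| |]; simpl in L0, L1; try contradiction.
  exists g. split.
  - intros r Hr. specialize (Hlb r Hr). simpl in Hlb. auto.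
  - intros e He. apply NNPP. intros Hn.
    assert (Rbar_le (g + e) g). { apply Hglb. intros r Hr. simpl. apply Rnot_lt_le. intros Hl. apply Hn. exists r; auto. }
    simpl in H. lra.
Qed.

Definition seqcpt (S : pt -> Prop) := forall u : nat -> pt, (forall n, S (u n)) ->
  exists phi c, incr phi /\ S c /\ cvg_pt (fun k => u (phi k)) c.

Lemma minex (S : pt -> Prop) (f : pt -> R) L z0 :
  S z0 -> (forall z, S z -> L <= f z) -> seqcpt S ->
  (forall (u : nat -> pt) c, (forall n, S (u n)) -> S c -> cvg_pt u c -> is_lim_seq (fun n => f (u n)) (f c)) ->
  exists c, S c /\ forall z, S z -> f c <= f z.
Proof. intros H0 HL Hc Hf.
  destruct (glbR (fun r => exists z, S z /\ r = f z) L (f z0)) as [m [Hm1 Hm2]].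
  { exists z0; auto. } { intros r [z [Hz ->]]; auto. }
  assert (forall k : nat, exists z, S z /\ f z < m + / (INR k + 1)).
  { intros k. destruct (Hm2 (/ (INR k + 1))) as [r [[z [Hz ->]] Hr]].
    apply Rinv_0_lt_compat; pose proof (pos_INR k); lra. exists z; auto. }
  destruct (choice _ H) as [u Hu].
  destruct (Hc u (fun n => proj1 (Hu n))) as [phi [c [Hp [Sc Hcv]]]].
  exists c. split; auto. intros z Hz.
  assert (f c <= m).
  { apply (lim_le (fun k => f (u (phi k))) (fun k => m + / (INR k + 1))).
    - intros k. left. eapply Rlt_le_trans. apply Hu. apply Rplus_le_compat_l.
      apply Rinv_le_contravar. pose proof (pos_INR k); lra. apply Rplus_le_compat_r. apply le_INR. apply incr_ge; auto.
    - apply Hf; auto. intros; apply Hu.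
    - assert (L0 : is_lim_seq (fun k => m + / (INR k + 1)) (m + 0)).
      2: { rewrite Rplus_0_r in L0; exact L0. }
      apply is_lim_seq_plus'. apply is_lim_seq_const. apply lim_inv_bound. intros k.
      rewrite Rminus_0_r, Rabs_pos_eq. lra. left; apply Rinv_0_lt_compat; pose proof (pos_INR k); lra. }
  pose proof (Hm1 (f z) (ex_intro _ z (conj Hz eq_refl))). lra.
Qed.

Definition comb3 (l1 l2 : R) (p1 p2 p3 : pt) : pt :=
  padd (padd (pscal l1 p1) (pscal l2 p2)) (pscal (1 - l1 - l2) p3).

Definition Hset (A : pt -> Prop) (x c : pt) : Prop :=
  exists l1 l2 p1 p2 p3, 0 <= l1 /\ 0 <= l2 /\ l1 + l2 <= 1 /\
    proj A x p1 /\ proj A x p2 /\ proj A x p3 /\ c = comb3 l1 l2 p1 p2 p3.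

Lemma proj_bound A x p : proj A x p -> norm2 p <= norm2 x + dist_set A x.
Proof. intros [_ H]. pose proof (norm2_sub_norm p x). lra. Qed.

Lemma proj_closed A x (u : nat -> pt) c : seqcl A -> (forall n, proj A x (u n)) -> cvg_pt u c -> proj A x c.
Proof. intros Hs Hu Hc. split.
  - apply (Hs u c); auto. intros n; apply Hu.
  - pose proof (lim_norm u c x Hc).
    apply (is_lim_seq_ext _ (fun _ => dist_set A x)) in H. 2: { intros n; apply Hu. }
    apply is_lim_seq_unique in H. rewrite Lim_seq_const in H. inversion H; auto.
Qed.

Lemma cvg_pt_ext (u v : nat -> pt) x : (forall n, u n = v n) -> cvg_pt u x -> cvg_pt v x.
Proof. intros E H eps He. destruct (H eps He) as [N HN]. exists N. intros n Hn. rewrite <- E. auto. Qed.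

Lemma lim_fst (u : nat -> pt) x : cvg_pt u x -> is_lim_seq (fun n => fst (u n)) (fst x).
Proof. apply cvg_pt_fst. Qed.

Lemma Hset_cpt A x : seqcl A -> seqcpt (Hset A x).
Proof. intros Hs u Hu.
  assert (Hw : forall n, exists w : pt * (pt * (pt * pt)),
    0 <= fst (fst w) /\ 0 <= snd (fst w) /\ fst (fst w) + snd (fst w) <= 1 /\
    proj A x (fst (snd w)) /\ proj A x (fst (snd (snd w))) /\ proj A x (snd (snd (snd w))) /\
    u n = comb3 (fst (fst w)) (snd (fst w)) (fst (snd w)) (fst (snd (snd w))) (snd (snd (snd w)))).
  { intros n. destruct (Hu n) as [l1 [l2 [p1 [p2 [p3 H]]]]]. exists ((l1,l2),(p1,(p2,p3))). simpl. auto. }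
  destruct (choice _ Hw) as [w Hwp].
  set (M := norm2 x + dist_set A x).
  destruct (bw (fun n => fst (w n)) 2) as [f1 [L [H1 C1]]].
  { intros n. destruct (Hwp n) as [a [b [c _]]]. eapply Rle_trans. apply norm2_comp.
    rewrite !Rabs_pos_eq; lra. }
  destruct (bw (fun k => fst (snd (w (f1 k)))) M) as [f2 [P1 [H2 C2]]].
  { intros n. apply proj_bound. apply Hwp. }
  destruct (bw (fun k => fst (snd (snd (w (f1 (f2 k)))))) M) as [f3 [P2 [H3 C3]]].
  { intros n. apply proj_bound. apply Hwp. }
  destruct (bw (fun k => snd (snd (snd (w (f1 (f2 (f3 k))))))) M) as [f4 [P3 [H4 C4]]].
  { intros n. apply proj_bound. apply Hwp. }
  set (F := fun k => f1 (f2 (f3 (f4 k)))).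
  assert (HF : incr F). { unfold F. apply incr_comp; auto. apply incr_comp; auto. apply incr_comp; auto. }
  assert (CL : cvg_pt (fun k => fst (w (F k))) L).
  { unfold F. apply (cvg_pt_sub (fun k => fst (w (f1 k))) L (fun k => f2 (f3 (f4 k)))).
    apply incr_comp; auto. apply incr_comp; auto. auto. }
  assert (CP1 : cvg_pt (fun k => fst (snd (w (F k)))) P1).
  { unfold F. apply (cvg_pt_sub (fun k => fst (snd (w (f1 (f2 k))))) P1 (fun k => f3 (f4 k))).
    apply incr_comp; auto. auto. }
  assert (CP2 : cvg_pt (fun k => fst (snd (snd (w (F k))))) P2).
  { unfold F. apply (cvg_pt_sub (fun k => fst (snd (snd (w (f1 (f2 (f3 k))))))) P2 f4). auto. auto. }
  assert (CP3 : cvg_pt (fun k => snd (snd (snd (w (F k))))) P3) by (unfold F; exact C4).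
  clearbody F.
  exists F, (comb3 (fst L) (snd L) P1 P2 P3). split; auto. split.
  - exists (fst L), (snd L), P1, P2, P3.
    pose proof (cvg_pt_fst _ _ CL) as L1. pose proof (cvg_pt_snd _ _ CL) as L2.
    split; [|split; [|split; [|split; [|split; [|split]]]]]; auto.
    + apply (lim_le (fun _ => 0) (fun k => fst (fst (w (F k))))); auto. intros; apply Hwp. apply is_lim_seq_const.
    + apply (lim_le (fun _ => 0) (fun k => snd (fst (w (F k))))); auto. intros; apply Hwp. apply is_lim_seq_const.
    + apply (lim_le (fun k => fst (fst (w (F k))) + snd (fst (w (F k)))) (fun _ => 1)); auto. intros; apply Hwp.
      apply is_lim_seq_plus'; auto. apply is_lim_seq_const.
    + apply (proj_closed A x (fun k => fst (snd (w (F k)))) P1 Hs); auto. intros; apply Hwp.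
    + apply (proj_closed A x (fun k => fst (snd (snd (w (F k))))) P2 Hs); auto. intros; apply Hwp.
    + apply (proj_closed A x (fun k => snd (snd (snd (w (F k))))) P3 Hs); auto. intros; apply Hwp.
  - apply (cvg_pt_ext (fun k => comb3 (fst (fst (w (F k)))) (snd (fst (w (F k)))) (fst (snd (w (F k))))
       (fst (snd (snd (w (F k))))) (snd (snd (snd (w (F k))))))).
    intros n; symmetry; apply Hwp.
    pose proof (cvg_pt_fst _ _ CL) as L1. pose proof (cvg_pt_snd _ _ CL) as L2.
    unfold comb3. apply cvg_pt_padd. apply cvg_pt_padd; apply cvg_pt_scal; auto.
    apply cvg_pt_scal; auto. apply is_lim_seq_minus'; auto. apply is_lim_seq_minus'; auto. apply is_lim_seq_const.
Qed.


Definition S4x (m : nat -> R) (q : nat -> pt) : R :=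
  m 0%nat * fst (q 0%nat) + m 1%nat * fst (q 1%nat) + m 2%nat * fst (q 2%nat) + m 3%nat * fst (q 3%nat).
Definition S4y (m : nat -> R) (q : nat -> pt) : R :=
  m 0%nat * snd (q 0%nat) + m 1%nat * snd (q 1%nat) + m 2%nat * snd (q 2%nat) + m 3%nat * snd (q 3%nat).
Definition S4 (m : nat -> R) : R := m 0%nat + m 1%nat + m 2%nat + m 3%nat.

Definition mk4 (a b c d : R) : nat -> R :=
  fun i => match i with O => a | 1%nat => b | 2%nat => c | _ => d end.

Definition det (a b : pt) := fst a * snd b - snd a * fst b.

Lemma affdep0 (q : nat -> pt) : exists mu, S4 mu = 0 /\ S4x mu q = 0 /\ S4y mu q = 0 /\
   exists j, (j <= 3)%nat /\ mu j <> 0.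
Proof.
  set (u := psub (q 0%nat) (q 3%nat)). set (v := psub (q 1%nat) (q 3%nat)). set (w := psub (q 2%nat) (q 3%nat)).
  destruct (Req_dec (det v w) 0) as [E1|E1];
  [destruct (Req_dec (det u w) 0) as [E2|E2];
   [destruct (Req_dec (det u v) 0) as [E3|E3] |] |].
  - destruct (Req_dec (ns u) 0) as [E4|E4].
    + exists (mk4 1 0 0 (-1)). unfold S4, S4x, S4y, mk4.
      assert (fst u = 0 /\ snd u = 0) as [U1 U2] by (unfold ns in E4; split; nra).
      unfold u, psub in U1, U2; simpl in U1, U2.
      split; [ring|split; [lra|split; [lra|]]]. exists O. split. lia. simpl; lra.
    + exists (mk4 (dot u v) (- ns u) 0 (ns u - dot u v)). unfold S4, S4x, S4y, mk4.
      unfold det, u, v, ns, dot, psub in *; simpl in *.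
      split; [ring|split; [|split]].
      * transitivity ((snd (q 0%nat) - snd (q 3%nat)) * ((fst (q 0%nat) - fst (q 3%nat)) * (snd (q 1%nat) - snd (q 3%nat)) -
         (snd (q 0%nat) - snd (q 3%nat)) * (fst (q 1%nat) - fst (q 3%nat)))). ring. rewrite E3; ring.
      * transitivity (- (fst (q 0%nat) - fst (q 3%nat)) * ((fst (q 0%nat) - fst (q 3%nat)) * (snd (q 1%nat) - snd (q 3%nat)) -
         (snd (q 0%nat) - snd (q 3%nat)) * (fst (q 1%nat) - fst (q 3%nat)))). ring. rewrite E3; ring.
      * exists 1%nat. split. lia. simpl. lra.
  - exists (mk4 (det v w) (- det u w) (det u v) (- (det v w - det u w + det u v))).
    unfold S4, S4x, S4y, mk4. split; [ring|split; [|split]].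
    unfold det, u, v, w, psub; simpl; ring. unfold det, u, v, w, psub; simpl; ring.
    exists 2%nat. split. lia. simpl. auto.
  - exists (mk4 (det v w) (- det u w) (det u v) (- (det v w - det u w + det u v))).
    unfold S4, S4x, S4y, mk4. split; [ring|split; [|split]].
    unfold det, u, v, w, psub; simpl; ring. unfold det, u, v, w, psub; simpl; ring.
    exists 1%nat. split. lia. simpl. lra.
  - exists (mk4 (det v w) (- det u w) (det u v) (- (det v w - det u w + det u v))).
    unfold S4, S4x, S4y, mk4. split; [ring|split; [|split]].
    unfold det, u, v, w, psub; simpl; ring. unfold det, u, v, w, psub; simpl; ring.
    exists 0%nat. split. lia. simpl. auto.
Qed.

Lemma affdep (q : nat -> pt) : exists mu, S4 mu = 0 /\ S4x mu q = 0 /\ S4y mu q = 0 /\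
   exists j, (j <= 3)%nat /\ mu j > 0.
Proof. destruct (affdep0 q) as [mu [H1 [H2 [H3 [j [Hj Hn]]]]]].
  destruct (Rlt_dec 0 (mu j)).
  - exists mu; repeat split; auto. exists j; auto.
  - exists (fun i => - mu i). unfold S4, S4x, S4y in *. repeat split; try lra.
    exists j. split; auto. lra.
Qed.

Lemma argmin (f : nat -> R) (P : nat -> Prop) n : (exists i, (i <= n)%nat /\ P i) ->
  exists k, (k <= n)%nat /\ P k /\ forall j, (j <= n)%nat -> P j -> f k <= f j.
Proof. induction n; intros [i [Hi Pi]].
  - exists O. assert (i = O) by lia. subst. split; auto. split; auto. intros j Hj _. assert (j = O) by lia. subst; lra.
  - destruct (classic (exists i, (i <= n)%nat /\ P i)) as [Hex|Hnex].
    + destruct (IHn Hex) as [k [Hk [Pk Hmin]]].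
      destruct (classic (P (S n) /\ f (S n) < f k)) as [[PS Hlt]|Hno].
      * exists (S n). split; auto. split; auto. intros j Hj Pj. destruct (Nat.eq_dec j (S n)). subst; lra.
        assert (f k <= f j) by (apply Hmin; auto; lia). lra.
      * exists k. split; auto. split; auto. intros j Hj Pj. destruct (Nat.eq_dec j (S n)).
        subst. apply Rnot_lt_le. intros Hl. apply Hno. auto. apply Hmin; auto; lia.
    + assert (i = S n). { destruct (Nat.eq_dec i (S n)); auto. exfalso. apply Hnex. exists i. split; auto. lia. }
      subst. exists (S n). split; auto. split; auto. intros j Hj Pj. destruct (Nat.eq_dec j (S n)). subst; lra.
      exfalso. apply Hnex. exists j. split; auto. lia.
Qed.

Lemma cara4 (P : pt -> Prop) (m : nat -> R) (q : nat -> pt) :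
  (forall i, (i <= 3)%nat -> P (q i) /\ 0 <= m i) -> S4 m = 1 ->
  exists l1 l2 r1 r2 r3, 0 <= l1 /\ 0 <= l2 /\ l1 + l2 <= 1 /\ P r1 /\ P r2 /\ P r3 /\
    (S4x m q, S4y m q) = comb3 l1 l2 r1 r2 r3.
Proof. intros Hq Hs.
  destruct (affdep q) as [mu [M0 [Mx [My Hj]]]].
  destruct (argmin (fun i => m i / mu i) (fun i => mu i > 0) 3 Hj) as [k [Hk [Pk Hmin]]].
  set (th := m k / mu k).
  assert (Hth : 0 <= th). { unfold th. apply Rmult_le_pos. apply Hq; auto. left; apply Rinv_0_lt_compat; auto. }
  set (m' := fun i => m i - th * mu i).
  assert (Hm' : forall i, (i <= 3)%nat -> 0 <= m' i).
  { intros i Hi. unfold m'. destruct (Rlt_dec 0 (mu i)).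
    - specialize (Hmin i Hi r). fold th in Hmin. unfold Rdiv in Hmin.
      apply (Rmult_le_compat_r (mu i)) in Hmin; [|lra]. rewrite Rmult_assoc, Rinv_l in Hmin; lra.
    - pose proof (Hq i Hi). nra. }
  assert (Hk0 : m' k = 0). { unfold m', th. field. lra. }
  assert (Es : S4 m' = 1). { unfold S4, m' in *. nra. }
  assert (Ex : S4x m' q = S4x m q). {
     transitivity (S4x m q - th * S4x mu q). unfold S4x, m'; ring. rewrite Mx; ring. }
  assert (Ey : S4y m' q = S4y m q). {
     transitivity (S4y m q - th * S4y mu q). unfold S4y, m'; ring. rewrite My; ring. }
  rewrite <- Ex, <- Ey. clearbody m'.
  pose proof (Hm' 0%nat ltac:(lia)). pose proof (Hm' 1%nat ltac:(lia)).
  pose proof (Hm' 2%nat ltac:(lia)). pose proof (Hm' 3%nat ltac:(lia)).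
  pose proof (proj1 (Hq 0%nat ltac:(lia))). pose proof (proj1 (Hq 1%nat ltac:(lia))).
  pose proof (proj1 (Hq 2%nat ltac:(lia))). pose proof (proj1 (Hq 3%nat ltac:(lia))).
  unfold S4 in Es. unfold S4x, S4y, comb3, padd, pscal.
  assert (Hk4 : (k = 0 \/ k = 1 \/ k = 2 \/ k = 3)%nat) by lia.
  destruct Hk4 as [ -> | [ -> | [ -> | -> ] ] ].
  - exists (m' 1%nat), (m' 2%nat), (q 1%nat), (q 2%nat), (q 3%nat).
    split; [lra|split; [lra|split; [lra|split; [auto|split; [auto|split; [auto|]]]]]].
    f_equal; simpl; replace (1 - m' 1%nat - m' 2%nat) with (m' 3%nat) by lra; rewrite Hk0; ring.
  - exists (m' 0%nat), (m' 2%nat), (q 0%nat), (q 2%nat), (q 3%nat).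
    split; [lra|split; [lra|split; [lra|split; [auto|split; [auto|split; [auto|]]]]]].
    f_equal; simpl; replace (1 - m' 0%nat - m' 2%nat) with (m' 3%nat) by lra; rewrite Hk0; ring.
  - exists (m' 0%nat), (m' 1%nat), (q 0%nat), (q 1%nat), (q 3%nat).
    split; [lra|split; [lra|split; [lra|split; [auto|split; [auto|split; [auto|]]]]]].
    f_equal; simpl; replace (1 - m' 0%nat - m' 1%nat) with (m' 3%nat) by lra; rewrite Hk0; ring.
  - exists (m' 0%nat), (m' 1%nat), (q 0%nat), (q 1%nat), (q 2%nat).
    split; [lra|split; [lra|split; [lra|split; [auto|split; [auto|split; [auto|]]]]]].
    f_equal; simpl; replace (1 - m' 0%nat - m' 1%nat) with (m' 2%nat) by lra; rewrite Hk0; ring.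
Qed.


Lemma qb s B C : 0 <= s -> 0 <= B -> 0 <= C -> s * s <= B + C * s -> s <= 1 + B + C.
Proof. intros. destruct (Rle_dec s 1). lra. nra. Qed.

Lemma dot_sym a b : dot a b = dot b a.
Proof. unfold dot; ring. Qed.

Definition q4 (p1 p2 p3 p : pt) : nat -> pt :=
  fun i => match i with O => p1 | 1%nat => p2 | 2%nat => p3 | _ => p end.

Lemma vi A x u c : Hset A x c -> (forall z, Hset A x z -> ns (psub u c) <= ns (psub u z)) ->
  forall p, proj A x p -> dot (psub u c) (psub p c) <= 0.
Proof. intros [l1 [l2 [p1 [p2 [p3 [H1 [H2 [H3 [P1 [P2 [P3 Ec]]]]]]]]]]] Hmin p Hp.
  assert (Ht : forall t, 0 < t <= 1 -> 2 * t * dot (psub u c) (psub p c) <= t * t * ns (psub p c)).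
  { intros t Ht.
    destruct (cara4 (proj A x) (mk4 ((1-t)*l1) ((1-t)*l2) ((1-t)*(1-l1-l2)) t) (q4 p1 p2 p3 p))
      as [k1 [k2 [r1 [r2 [r3 [K1 [K2 [K3 [R1 [R2 [R3 Ek]]]]]]]]]]].
    { intros i Hi. assert (Hi4 : (i = 0 \/ i = 1 \/ i = 2 \/ i = 3)%nat) by lia.
      destruct Hi4 as [ -> | [ -> | [ -> | -> ] ] ]; simpl; split; auto; nra. }
    { unfold S4, mk4; ring. }
    assert (Hz : Hset A x (comb3 k1 k2 r1 r2 r3)).
    { exists k1, k2, r1, r2, r3. repeat split; auto; apply R1 || apply R2 || apply R3. }
    specialize (Hmin _ Hz). rewrite <- Ek in Hmin.
    assert (E : ns (psub u (S4x (mk4 ((1-t)*l1) ((1-t)*l2) ((1-t)*(1-l1-l2)) t) (q4 p1 p2 p3 p),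
                             S4y (mk4 ((1-t)*l1) ((1-t)*l2) ((1-t)*(1-l1-l2)) t) (q4 p1 p2 p3 p))) =
        ns (psub u c) - 2 * t * dot (psub u c) (psub p c) + t * t * ns (psub p c)).
    { rewrite Ec. unfold S4x, S4y, mk4, q4, comb3, ns, dot, psub, padd, pscal; simpl; ring. }
    lra. }
  apply le_eps. intros e He.
  set (t := Rmin 1 (e / (ns (psub p c) + 1))).
  pose proof (ns_ge0 (psub p c)).
  assert (T0 : 0 < t). { unfold t. apply Rmin_glb_lt. lra. apply Rdiv_lt_0_compat; lra. }
  assert (T1 : t <= 1) by apply Rmin_l.
  assert (T2 : t * ns (psub p c) <= e).
  { assert (t <= e / (ns (psub p c) + 1)) by apply Rmin_r.
    apply (Rmult_le_compat_r (ns (psub p c) + 1)) in H0; [|lra].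
    unfold Rdiv in H0. rewrite Rmult_assoc, Rinv_l in H0; lra. }
  clearbody t. specialize (Ht t (conj T0 T1)).
  assert (2 * t * dot (psub u c) (psub p c) <= t * e) by nra.
  nra.
Qed.

Lemma danskin A x0 x v c : A x0 -> seqcl A -> subg (phiA A) x v ->
  (forall p, proj A x p -> dot (psub (pscal (/2) v) c) (psub p c) <= 0) -> pscal (/2) v = c.
Proof. intros HA Hs Hv Hvi.
  remember (pscal (/2) v) as u.
  assert (Ev : v = pscal 2 u). { subst. unfold pscal; destruct v; simpl; f_equal; field. }
  remember (psub u c) as h.
  destruct (Req_dec (ns h) 0) as [E0|E0].
  { subst h. unfold ns, psub in E0; simpl in E0. destruct u as [r r0], c as [r1 r2]; simpl in *.
    pose proof (Rle_0_sqr (r - r1)); pose proof (Rle_0_sqr (r0 - r2)); unfold Rsqr in *.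
    assert (Ha1 : (r - r1) * (r - r1) = 0) by lra. assert (Ha2 : (r0 - r2) * (r0 - r2) = 0) by lra.
    apply Rmult_integral in Ha1. apply Rmult_integral in Ha2. f_equal; lra. }
  assert (Hh : 0 < ns h) by (pose proof (ns_ge0 h); lra).
  set (t := fun k : nat => / (INR k + 1)).
  assert (Ht : forall k, 0 < t k <= 1).
  { intros k. unfold t. pose proof (pos_INR k). split. apply Rinv_0_lt_compat; lra.
    rewrite <- Rinv_1. apply Rinv_le_contravar; lra. }
  set (z := fun k => padd x (pscal (t k) h)).
  assert (Ha : forall k, exists a, A a /\ ns (psub a (z k)) < dist2_set A (z k) + t k * ns h).
  { intros k. apply (D_approx A _ x0); auto. specialize (Ht k). nra. }
  destruct (choice _ Ha) as [a Hap].
  set (B := fun a => phiA A x - (2 * dot x a - ns a)).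
  assert (HB0 : forall a, A a -> 0 <= B a). { intros b Hb. unfold B. pose proof (phi_ge A x b Hb). lra. }
  assert (HK : forall k, B (a k) + t k * ns h < 2 * t k * dot (psub (a k) c) h).
  { intros k. destruct (Hap k) as [_ Hk]. specialize (Hv (z k)).
    unfold phiA in Hv, B. unfold phiA.
    assert (E1 : psub (z k) x = pscal (t k) h) by (unfold z; pteq).
    rewrite E1 in Hv.
    assert (E2 : ns (psub (a k) (z k)) = ns (a k) - 2 * dot (a k) x - 2 * t k * dot (a k) h + ns (z k)).
    { unfold z, ns, dot, psub, padd, pscal; simpl; ring. }
    assert (E3 : dot v (pscal (t k) h) = t k * (2 * dot c h + 2 * ns h)).
    { rewrite Ev, Heqh. unfold dot, ns, pscal, psub; simpl; ring. }
    assert (E4 : dot (psub (a k) c) h = dot (a k) h - dot c h). { unfold dot, psub; simpl; ring. }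
    assert (E5 : dot x (a k) = dot (a k) x) by apply dot_sym.
    unfold B, phiA. rewrite E4, E5. rewrite E2 in Hk. rewrite E3 in Hv. nra. }
  assert (HI : forall k, ns h / 2 < dot (psub (a k) c) h).
  { intros k. specialize (HK k). specialize (Ht k). pose proof (HB0 (a k) (proj1 (Hap k))). 
    apply (Rmult_lt_reg_l (2 * t k)). lra. nra. }
  set (Mb := 1 + (dist2_set A x + 2 * norm2 h * norm2 (psub x c)) + 2 * norm2 h).
  assert (HBd : forall k, norm2 (psub (a k) x) <= Mb).
  { intros k. specialize (HK k). specialize (Ht k). pose proof (HB0 (a k) (proj1 (Hap k))).
    assert (EB : B (a k) = ns (psub (a k) x) - dist2_set A x).
    { unfold B, phiA, ns, dot, psub; simpl; ring. }
    pose proof (dot_le (psub (a k) c) h).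
    pose proof (norm2_tri3 (a k) x c).
    pose proof (norm2_ge0 h). pose proof (norm2_ge0 (psub x c)). pose proof (norm2_ge0 (psub (a k) x)).
    assert (Hq : norm2 (psub (a k) x) * norm2 (psub (a k) x) <=
       (dist2_set A x + 2 * norm2 h * norm2 (psub x c)) + 2 * norm2 h * norm2 (psub (a k) x)).
    { rewrite norm2_sq. pose proof (ns_ge0 h).
      pose proof (norm2_ge0 (psub (a k) c)).
      assert (S1 : t k * dot (psub (a k) c) h <= norm2 (psub (a k) c) * norm2 h).
      { destruct (Rle_dec (dot (psub (a k) c) h) 0). nra. 
        apply Rle_trans with (dot (psub (a k) c) h); auto. nra. }
      assert (S2 : norm2 (psub (a k) c) * norm2 h <= (norm2 (psub (a k) x) + norm2 (psub x c)) * norm2 h).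
      { apply Rmult_le_compat_r; auto. }
      nra. }
    unfold Mb. apply qb; auto. pose proof (D_ge0 A x x0 HA). nra. lra. }
  destruct (bw a (norm2 x + Mb)) as [phi [ainf [Hphi Hcv]]].
  { intros n. pose proof (norm2_sub_norm (a n) x). specialize (HBd n). lra. }
  assert (Ainf : A ainf) by (apply (Hs (fun k => a (phi k)) ainf); auto; intros; apply Hap).
  assert (L1 : ns h / 2 <= dot (psub ainf c) h).
  { apply (lim_le (fun _ => ns h / 2) (fun k => dot (psub (a (phi k)) c) h)).
    intros; left; apply HI. apply is_lim_seq_const. apply lim_dot. apply cvg_pt_psub; auto. apply cvg_pt_const.
    apply cvg_pt_const. }
  set (K0 := (Mb + norm2 (psub x c)) * norm2 h).
  assert (L2 : B ainf <= 0).
  { apply (lim_le (fun k => B (a (phi k))) (fun k => 2 * K0 * t (phi k))).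
    - intros k. specialize (HK (phi k)). specialize (Ht (phi k)).
      pose proof (dot_le (psub (a (phi k)) c) h). pose proof (norm2_tri3 (a (phi k)) x c).
      specialize (HBd (phi k)). pose proof (norm2_ge0 h).
      assert (norm2 (psub (a (phi k)) c) * norm2 h <= K0) by (unfold K0; nra).
      pose proof (ns_ge0 h). nra.
    - unfold B. apply is_lim_seq_minus'. apply is_lim_seq_const. apply is_lim_seq_minus'.
      apply is_lim_seq_mult'. apply is_lim_seq_const. apply lim_dot; auto. apply cvg_pt_const. apply lim_ns; auto.
    - assert (L0 : is_lim_seq (fun k => 2 * K0 * t (phi k)) (2 * K0 * 0)).
      2: { rewrite Rmult_0_r in L0. exact L0. }
      apply is_lim_seq_mult'. apply is_lim_seq_const. apply (lim_sub t 0 phi Hphi). apply lim_inv_bound. intros k.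
      unfold t. rewrite Rminus_0_r, Rabs_pos_eq. lra. left; apply Rinv_0_lt_compat; pose proof (pos_INR k); lra. }
  assert (Pinf : proj A x ainf).
  { split; auto. pose proof (HB0 ainf Ainf).
    assert (EB : B ainf = ns (psub ainf x) - dist2_set A x).
    { unfold B, phiA, ns, dot, psub; simpl; ring. }
    rewrite D_eq, ns_norm in EB. pose proof (dist_ge0 A x x0 HA). pose proof (norm2_ge0 (psub ainf x)). nra. }
  specialize (Hvi ainf Pinf). rewrite dot_sym in Hvi. lra.
Qed.

Lemma rep A x0 x v : A x0 -> seqcl A -> subg (phiA A) x v -> Hset A x (pscal (/2) v).
Proof. intros HA Hs Hv.
  destruct (projex A x x0 HA Hs) as [p0 Hp0].
  destruct (minex (Hset A x) (fun c => ns (psub (pscal (/2) v) c)) 0 (comb3 1 0 p0 p0 p0)) as [c [Hc Hmin]].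
  - exists 1, 0, p0, p0, p0. repeat split; auto; try lra; apply Hp0.
  - intros; apply ns_ge0.
  - apply Hset_cpt; auto.
  - intros u c Hu Hc Hcv. apply lim_ns. apply cvg_pt_psub. apply cvg_pt_const. auto.
  - rewrite (danskin A x0 x v c); auto. intros p Hp. apply (vi A x); auto.
Qed.


Lemma key_hard A x0 x y : A x0 -> seqcl A -> subg (phiA A) x (psub (pscal 2 x) y) ->
  clarke_subdiff (dist2_set A) x y.
Proof. intros HA Hs Hv.
  destruct (rep A x0 x _ HA Hs Hv) as [l1 [l2 [p1 [p2 [p3 [H1 [H2 [H3 [P1 [P2 [P3 E]]]]]]]]]]].
  assert (Ex := f_equal fst E). assert (Ey := f_equal snd E).
  unfold comb3, pscal, padd, psub in Ex, Ey; simpl in Ex, Ey.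
  exists 2%nat, (fun i => match i with O => l1 | 1%nat => l2 | _ => 1 - l1 - l2 end),
    (fun i => pscal 2 (psub x (match i with O => p1 | 1%nat => p2 | _ => p3 end))).
  split; [|split].
  - intros i Hi. assert (Hi3 : (i = 0 \/ i = 1 \/ i = 2)%nat) by lia.
    destruct Hi3 as [ -> | [ -> | -> ] ]; split; try lra; apply gen_proj; auto.
  - simpl. ring.
  - unfold pscal, psub; simpl. destruct y as [y1 y2]; simpl in *. f_equal; nra.
Qed.

Definition Psi (A : pt -> Prop) (w0 z : pt) : R := phiA A z + ns (psub z w0) / 2.

Lemma fermat A x0 w0 m : A x0 -> (forall z, Psi A w0 m <= Psi A w0 z) -> subg (phiA A) m (psub w0 m).
Proof. intros HA Hm z. set (d := psub z m).
  assert (Ht : forall t, 0 < t <= 1 -> phiA A m + dot (psub w0 m) d <= phiA A z + t * ns d / 2).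
  { intros t Ht. specialize (Hm (cmb t m z)). unfold Psi in Hm.
    pose proof (phi_convex A x0 m z t HA ltac:(lra)).
    assert (E : ns (psub (cmb t m z) w0) = ns (psub m w0) - 2 * t * dot (psub w0 m) d + t * t * ns d).
    { unfold d, cmb, ns, dot, psub, padd, pscal; simpl; ring. }
    rewrite E in Hm. apply (Rmult_le_reg_l t). lra. nra. }
  apply le_eps. intros e He. pose proof (ns_ge0 d).
  set (t := Rmin 1 (e / (ns d + 1))).
  assert (T0 : 0 < t). { unfold t. apply Rmin_glb_lt. lra. apply Rdiv_lt_0_compat; lra. }
  assert (T1 : t <= 1) by apply Rmin_l.
  assert (T2 : t * ns d <= e).
  { assert (t <= e / (ns d + 1)) by apply Rmin_r.
    apply (Rmult_le_compat_r (ns d + 1)) in H0; [|lra].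
    unfold Rdiv in H0. rewrite Rmult_assoc, Rinv_l in H0; lra. }
  clearbody t. specialize (Ht t (conj T0 T1)). lra.
Qed.

Lemma psi_lb A a w0 z : A a -> 2 * dot w0 a - 3 * ns a <= Psi A w0 z.
Proof. intros Ha. unfold Psi. pose proof (phi_ge A z a Ha).
  pose proof (ns_ge0 (padd (psub z w0) (pscal 2 a))).
  assert (E : ns (padd (psub z w0) (pscal 2 a)) = ns (psub z w0) + 4 * dot (psub z w0) a + 4 * ns a).
  { unfold ns, dot, padd, psub, pscal; simpl; ring. }
  assert (E2 : dot z a = dot (psub z w0) a + dot w0 a). { unfold dot, psub; simpl; ring. }
  lra. Qed.

Lemma psi_min A a w0 (x : pt) : A a -> exists m, forall z, Psi A w0 m <= Psi A w0 z.
Proof. intros Ha.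
  set (S := fun z => Psi A w0 z <= Psi A w0 x).
  assert (Hcont : forall (u : nat -> pt) c, cvg_pt u c -> is_lim_seq (fun n => Psi A w0 (u n)) (Psi A w0 c)).
  { intros u c Hc. unfold Psi. apply is_lim_seq_plus'. apply (lim_phi A a); auto.
    apply is_lim_seq_mult'. apply lim_ns. apply cvg_pt_psub; auto. apply cvg_pt_const. apply is_lim_seq_const. }
  set (c1 := Psi A w0 x - 2 * dot w0 a + ns a).
  assert (Hb : forall z, S z -> norm2 z <= norm2 w0 + (1 + Rabs (2 * c1) + 4 * norm2 a)).
  { intros z Hz. unfold S in Hz. assert (EP : Psi A w0 z = phiA A z + ns (psub z w0) / 2) by reflexivity. pose proof (phi_ge A z a Ha).
    assert (E2 : dot z a = dot (psub z w0) a + dot w0 a). { unfold dot, psub; simpl; ring. }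
    pose proof (cs (psub z w0) a).
    assert (ns (psub z w0) <= 2 * c1 + 4 * norm2 (psub z w0) * norm2 a).
    { unfold c1. unfold Rabs in H0; destruct Rcase_abs in H0; lra. }
    assert (norm2 (psub z w0) <= 1 + Rabs (2 * c1) + 4 * norm2 a).
    { apply qb. apply norm2_ge0. apply Rabs_pos. pose proof (norm2_ge0 a); lra.
      rewrite norm2_sq. pose proof (Rle_abs (2 * c1)). lra. }
    pose proof (norm2_sub_norm z w0). lra. }
  destruct (minex S (Psi A w0) (2 * dot w0 a - 3 * ns a) x) as [m [Sm Hm]].
  - unfold S; lra.
  - intros; apply psi_lb; auto.
  - intros u Hu. destruct (bw u _ (fun n => Hb (u n) (Hu n))) as [phi [c [Hp Hc]]].
    exists phi, c. split; auto. split; auto. unfold S.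
    apply (lim_le (fun k => Psi A w0 (u (phi k))) (fun _ => Psi A w0 x)); auto. intros; apply Hu.
    apply is_lim_seq_const.
  - intros u c _ _ Hc. apply Hcont; auto.
  - exists m. intros z. destruct (Rle_dec (Psi A w0 z) (Psi A w0 x)).
    + apply Hm; auto.
    + specialize (Hm x ltac:(unfold S; lra)). lra.
Qed.

Lemma lim_zero_est (s rho al : nat -> R) : (forall n, 0 <= s n) ->
  (forall n, s n * s n / 2 <= rho n + 2 * al n * s n) ->
  is_lim_seq rho 0 -> is_lim_seq al 0 -> is_lim_seq s 0.
Proof. intros Hs H Hr Ha. apply is_lim_seq_spec. apply is_lim_seq_spec in Hr, Ha.
  intros eps. set (e := Rmin eps 1). assert (He : 0 < e) by (unfold e; apply Rmin_glb_lt; [apply cond_pos|lra]).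
  assert (He2 : e <= eps) by apply Rmin_l.
  destruct (Hr (mkposreal (e * e / 8) ltac:(apply Rdiv_lt_0_compat; nra))) as [N1 HN1].
  destruct (Ha (mkposreal (e / 8) ltac:(lra))) as [N2 HN2]. simpl in *.
  exists (N1 + N2)%nat. intros n Hn. specialize (HN1 n ltac:(lia)). specialize (HN2 n ltac:(lia)).
  rewrite Rminus_0_r in *. specialize (H n). specialize (Hs n).
  rewrite Rabs_pos_eq by auto.
  apply Rabs_def2 in HN1. apply Rabs_def2 in HN2.
  destruct (Rlt_dec (s n) e). lra. exfalso.
  assert (rho n + 2 * al n * s n <= s n * s n * (3/8)) by nra. nra.
Qed.


Lemma not_ev (P : nat -> Prop) : ~ (exists N, forall n, (N <= n)%nat -> P n) ->
  forall N, exists n, (N <= n)%nat /\ ~ P n.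
Proof. intros H N. apply NNPP. intros Hn. apply H. exists N. intros n Hn2.
  apply NNPP. intros HP. apply Hn. exists n; auto. Qed.

Lemma pk_ne (Xs : nat -> pt -> Prop) X : (exists x, X x) ->
  (forall x, liminf_set cvg_pt Xs x <-> X x) -> forall n, exists a, Xs n a.
Proof. intros [x Hx] H n. apply H in Hx. destruct Hx as [u [Hu _]]. exists (u n); auto. Qed.

Lemma pk_seqcl (Xs : nat -> pt -> Prop) X :
  (forall x, liminf_set cvg_pt Xs x <-> X x) -> (forall x, limsup_set cvg_pt Xs x <-> X x) -> seqcl X.
Proof. intros Hi Hs u c Hu Hc.
  assert (HW : forall j, exists w : nat -> pt, (forall n, Xs n (w n)) /\ cvg_pt w (u j)).
  { intros j. apply Hi. auto. }
  destruct (choice _ HW) as [W HWp].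
  destruct (infseq (fun j n => norm2 (psub (W j n) (u j)) < / (INR j + 1))) as [phi [Hp Hq]].
  { intros j N. destruct (proj2 (HWp j) (/ (INR j + 1))) as [M HM].
    apply Rinv_0_lt_compat; pose proof (pos_INR j); lra.
    exists (N + M)%nat. split. lia. apply HM. lia. }
  apply Hs. exists phi, (fun j => W j (phi j)). split; auto. split.
  - intros k. apply HWp.
  - apply cvg_pt_iff. apply cvg_pt_iff in Hc. apply is_lim_seq_spec. apply is_lim_seq_spec in Hc.
    intros eps. destruct (Hc (mkposreal (eps/2) ltac:(pose proof (cond_pos eps); lra))) as [N1 HN1].
    destruct (small_inv (eps/2) ltac:(pose proof (cond_pos eps); lra)) as [N2 HN2]. simpl in *.
    exists (N1 + N2)%nat. intros n Hn. specialize (HN1 n ltac:(lia)).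
    rewrite Rminus_0_r, Rabs_pos_eq in * by apply norm2_ge0.
    pose proof (norm2_tri3 (W n (phi n)) (u n) c). specialize (Hq n).
    assert (/ (INR n + 1) <= / (INR N2 + 1)).
    { apply Rinv_le_contravar. pose proof (pos_INR N2); lra. apply Rplus_le_compat_r. apply le_INR. lia. }
    lra.
Qed.

Lemma pk_dist (Xs : nat -> pt -> Prop) X x0 : X x0 ->
  (forall x, liminf_set cvg_pt Xs x <-> X x) -> (forall x, limsup_set cvg_pt Xs x <-> X x) ->
  forall z, is_lim_seq (fun n => dist_set (Xs n) z) (dist_set X z).
Proof. intros HX Hi Hs z. pose proof (pk_ne Xs X (ex_intro _ x0 HX) Hi) as Hne.
  apply is_lim_seq_spec. intros eps. pose proof (cond_pos eps) as He.
  set (d := dist_set X z).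
  destruct (dist_approx X z x0 (eps/2) HX ltac:(lra)) as [a [Ha Had]].
  apply Hi in Ha. destruct Ha as [b [Hb Hbc]].
  destruct (Hbc (eps/2) ltac:(lra)) as [N1 HN1].
  assert (Hlow : exists N, forall n, (N <= n)%nat -> d - eps < dist_set (Xs n) z).
  { apply NNPP. intros Hn. pose proof (not_ev _ Hn) as Hf.
    destruct (infseq (fun _ n => ~ d - eps < dist_set (Xs n) z)) as [phi [Hp Hq]].
    { intros _ N. apply Hf. }
    assert (HB : forall k, exists b, Xs (phi k) b /\ norm2 (psub b z) < dist_set (Xs (phi k)) z + eps / 2).
    { intros k. destruct (Hne (phi k)) as [a0 Ha0]. apply (dist_approx _ z a0); auto. lra. }
    destruct (choice _ HB) as [bb Hbb].
    assert (Hd0 : 0 <= d) by (apply (dist_ge0 X z x0); auto).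
    assert (Hbd : forall k, norm2 (psub (bb k) z) <= d).
    { intros k. specialize (Hq k). destruct (Hbb k) as [_ H2]. lra. }
    destruct (bw bb (norm2 z + d)) as [psi [c [Hpsi Hc]]].
    { intros n. pose proof (norm2_sub_norm (bb n) z). specialize (Hbd n). lra. }
    assert (Xc : X c).
    { apply Hs. exists (fun k => phi (psi k)), (fun k => bb (psi k)). split. apply incr_comp; auto.
      split; auto. intros k. apply Hbb. }
    assert (norm2 (psub c z) <= d - eps / 2).
    { apply (lim_le (fun k => norm2 (psub (bb (psi k)) z)) (fun _ => d - eps / 2)).
      intros k. specialize (Hq (psi k)). destruct (Hbb (psi k)) as [_ H2]. lra.
      apply lim_norm; auto. apply is_lim_seq_const. }
    pose proof (dist_le X z c Xc). fold d in H0. lra. }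
  destruct Hlow as [N2 HN2].
  exists (N1 + N2)%nat. intros n Hn. specialize (HN1 n ltac:(lia)). specialize (HN2 n ltac:(lia)).
  pose proof (dist_le (Xs n) z (b n) (Hb n)). pose proof (norm2_tri3 (b n) a z).
  fold d in Had. unfold Rabs; destruct Rcase_abs; lra.
Qed.

Lemma pk_dist_sub (Xs : nat -> pt -> Prop) X x0 : X x0 ->
  (forall x, liminf_set cvg_pt Xs x <-> X x) -> (forall x, limsup_set cvg_pt Xs x <-> X x) ->
  forall phi (zs : nat -> pt) z, incr phi -> cvg_pt zs z ->
  is_lim_seq (fun k => dist_set (Xs (phi k)) (zs k)) (dist_set X z).
Proof. intros HX Hi Hs phi zs z Hp Hz.
  pose proof (pk_ne Xs X (ex_intro _ x0 HX) Hi) as Hne.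
  pose proof (lim_sub _ _ phi Hp (pk_dist Xs X x0 HX Hi Hs z)) as L.
  apply is_lim_seq_spec. apply is_lim_seq_spec in L. apply cvg_pt_iff in Hz. apply is_lim_seq_spec in Hz.
  intros eps. pose proof (cond_pos eps).
  destruct (L (mkposreal (eps/2) ltac:(lra))) as [N1 HN1].
  destruct (Hz (mkposreal (eps/2) ltac:(lra))) as [N2 HN2]. simpl in *.
  exists (N1 + N2)%nat. intros n Hn. specialize (HN1 n ltac:(lia)). specialize (HN2 n ltac:(lia)).
  rewrite Rminus_0_r, Rabs_pos_eq in HN2 by apply norm2_ge0.
  destruct (Hne (phi n)) as [a Ha].
  pose proof (dist_lip_abs (Xs (phi n)) (zs n) z a Ha).
  revert HN1 H0. unfold Rabs; repeat destruct Rcase_abs; intros; lra.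
Qed.

Lemma pk_phi_sub (Xs : nat -> pt -> Prop) X x0 : X x0 ->
  (forall x, liminf_set cvg_pt Xs x <-> X x) -> (forall x, limsup_set cvg_pt Xs x <-> X x) ->
  forall phi (zs : nat -> pt) z, incr phi -> cvg_pt zs z ->
  is_lim_seq (fun k => phiA (Xs (phi k)) (zs k)) (phiA X z).
Proof. intros HX Hi Hs phi zs z Hp Hz. unfold phiA. apply is_lim_seq_minus'. apply lim_ns; auto.
  eapply is_lim_seq_ext. intros n; symmetry; apply D_eq. rewrite D_eq.
  apply is_lim_seq_mult'; apply (pk_dist_sub Xs X x0); auto. Qed.


Lemma ident (x z p1 p2 p3 v : pt) l1 l2 F :
  F = 2 * dot x p1 - ns p1 -> F = 2 * dot x p2 - ns p2 -> F = 2 * dot x p3 - ns p3 ->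
  v = pscal 2 (comb3 l1 l2 p1 p2 p3) ->
  l1 * (2 * dot z p1 - ns p1) + l2 * (2 * dot z p2 - ns p2) + (1 - l1 - l2) * (2 * dot z p3 - ns p3)
    + ns (psub z (padd x v)) / 2
  = F + ns (psub x (padd x v)) / 2 + ns (psub z x) / 2.
Proof. intros H1 H2 H3 Hv. subst v.
  assert (Z1 : 2 * dot x p1 - ns p1 - F = 0) by lra.
  assert (Z2 : 2 * dot x p2 - ns p2 - F = 0) by lra.
  assert (Z3 : 2 * dot x p3 - ns p3 - F = 0) by lra.
  match goal with |- ?L = ?R =>
    assert (E : L - R = l1 * (2 * dot x p1 - ns p1 - F) + l2 * (2 * dot x p2 - ns p2 - F)
                 + (1 - l1 - l2) * (2 * dot x p3 - ns p3 - F)) end.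
  { unfold comb3, ns, dot, psub, padd, pscal; simpl; field. }
  rewrite Z1, Z2, Z3 in E. lra.
Qed.

Lemma ebound (z x b p : pt) :
  Rabs ((2 * dot z b - ns b) - (2 * dot z p - ns p)) <=
  2 * (norm2 x + norm2 (psub z x)) * norm2 (psub b p) + Rabs (ns b - ns p).
Proof.
  assert (E : (2 * dot z b - ns b) - (2 * dot z p - ns p) = 2 * dot z (psub b p) - (ns b - ns p)).
  { unfold dot, ns, psub; simpl; ring. }
  rewrite E. pose proof (cs z (psub b p)). pose proof (norm2_sub_norm z x).
  pose proof (norm2_ge0 (psub b p)).
  assert (norm2 z * norm2 (psub b p) <= (norm2 x + norm2 (psub z x)) * norm2 (psub b p)) by nra.
  pose proof (Rabs_triang (2 * dot z (psub b p)) (- (ns b - ns p))).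
  rewrite Rabs_Ropp in H3. rewrite Rabs_mult in H3. rewrite (Rabs_pos_eq 2) in H3 by lra.
  replace (2 * dot z (psub b p) - (ns b - ns p)) with (2 * dot z (psub b p) + - (ns b - ns p)) by ring.
  lra.
Qed.

Lemma pscal_half (v : pt) : v = pscal 2 (pscal (/2) v).
Proof. destruct v as [a b]; unfold pscal; simpl; f_equal; field. Qed.

Lemma wterm l e E : 0 <= l -> Rabs e <= E -> - (l * E) <= l * e.
Proof. intros. pose proof (Rle_abs (- e)). rewrite Rabs_Ropp in H1. nra. Qed.

Lemma lim_abs0 (u : nat -> R) (l : R) : is_lim_seq u l -> is_lim_seq (fun n => Rabs (u n - l)) 0.
Proof. intros H. apply is_lim_seq_spec. apply is_lim_seq_spec in H. intros eps. destruct (H eps) as [N HN].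
  exists N. intros n Hn. rewrite Rminus_0_r, Rabs_Rabsolu. auto. Qed.

Lemma lim_norm0 (u : nat -> pt) c : cvg_pt u c -> is_lim_seq (fun n => norm2 (psub (u n) c)) 0.
Proof. apply cvg_pt_iff. Qed.

Theorem mainTheorem5 (Xs : nat -> pt -> Prop) (X : pt -> Prop) :
  (forall n, closed_pt (Xs n)) ->
  (exists x, X x) ->
  PK_conv cvg_pt Xs X ->
  PK_conv cvg_pp
    (fun n => graph (clarke_subdiff (dist2_set (Xs n))))
    (graph (clarke_subdiff (dist2_set X))).
Proof.
  intros Hcl [x0 Hx0] [Hi Hs].
  assert (HXcl : seqcl X) by (apply (pk_seqcl Xs X); auto).
  assert (Hne : forall n, exists a, Xs n a) by (apply (pk_ne Xs X); eauto).
  assert (Hscl : forall n, seqcl (Xs n)) by (intros; apply closed_seqcl; auto).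
  assert (LS : forall w, limsup_set cvg_pp (fun n => graph (clarke_subdiff (dist2_set (Xs n)))) w ->
                graph (clarke_subdiff (dist2_set X)) w).
  { intros [x y] [phi [U [Hp [HU [C1 C2]]]]]. unfold graph in *; simpl in *.
    apply (key_hard X x0); auto. intros z.
    assert (HS : forall k, subg (phiA (Xs (phi k))) (fst (U k)) (psub (pscal 2 (fst (U k))) (snd (U k)))).
    { intros k. destruct (Hne (phi k)) as [a Ha]. apply (key_easy _ a); auto. }
    apply (lim_le (fun k => phiA (Xs (phi k)) (fst (U k)) + dot (psub (pscal 2 (fst (U k))) (snd (U k))) (psub z (fst (U k))))
                  (fun k => phiA (Xs (phi k)) z)).
    - intros k; apply HS.
    - apply is_lim_seq_plus'. apply (pk_phi_sub Xs X x0); auto.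
      apply lim_dot. apply cvg_pt_psub; auto. apply cvg_pt_scal; auto. apply is_lim_seq_const.
      apply cvg_pt_psub; auto. apply cvg_pt_const.
    - apply (pk_phi_sub Xs X x0 Hx0 Hi Hs phi (fun _ => z)); auto. apply cvg_pt_const. }
  assert (LI : forall w, graph (clarke_subdiff (dist2_set X)) w ->
                liminf_set cvg_pp (fun n => graph (clarke_subdiff (dist2_set (Xs n)))) w).
  { intros [x y] Hg. unfold graph in Hg; simpl in Hg.
    set (v := psub (pscal 2 x) y).
    pose proof (key_easy X x0 x y Hx0 Hg) as Hv. fold v in Hv.
    destruct (rep X x0 x v Hx0 HXcl Hv) as [l1 [l2 [p1 [p2 [p3 [H1 [H2 [H3 [P1 [P2 [P3 E]]]]]]]]]]].
    assert (Ev : v = pscal 2 (comb3 l1 l2 p1 p2 p3)). { rewrite <- E; apply pscal_half. }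
    set (w0 := padd x v).
    assert (HM : forall n, exists m, forall z, Psi (Xs n) w0 m <= Psi (Xs n) w0 z).
    { intros n. destruct (Hne n) as [a Ha]. apply (psi_min _ a w0 x); auto. }
    destruct (choice _ HM) as [xs Hxs].
    assert (HF : forall n, subg (phiA (Xs n)) (xs n) (psub w0 (xs n))).
    { intros n. destruct (Hne n) as [a Ha]. apply (fermat _ a); auto. }
    assert (Xconv : cvg_pt xs x).
    { destruct (proj2 (Hi p1) (proj1 P1)) as [b1 [Hb1 Cb1]].
      destruct (proj2 (Hi p2) (proj1 P2)) as [b2 [Hb2 Cb2]].
      destruct (proj2 (Hi p3) (proj1 P3)) as [b3 [Hb3 Cb3]].
      apply cvg_pt_iff.
      set (al := fun n => l1 * norm2 (psub (b1 n) p1) + l2 * norm2 (psub (b2 n) p2) + (1 - l1 - l2) * norm2 (psub (b3 n) p3)).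
      set (be := fun n => l1 * Rabs (ns (b1 n) - ns p1) + l2 * Rabs (ns (b2 n) - ns p2) + (1 - l1 - l2) * Rabs (ns (b3 n) - ns p3)).
      set (ga := fun n => Rabs (Psi (Xs n) w0 x - Psi X w0 x)).
      apply (lim_zero_est _ (fun n => ga n + be n + 2 * norm2 x * al n) al).
      - intros; apply norm2_ge0.
      - intros n. specialize (Hxs n x).
        pose proof (phi_ge (Xs n) (xs n) (b1 n) (Hb1 n)).
        pose proof (phi_ge (Xs n) (xs n) (b2 n) (Hb2 n)).
        pose proof (phi_ge (Xs n) (xs n) (b3 n) (Hb3 n)).
        assert (F1 : phiA X x = 2 * dot x p1 - ns p1).
        { unfold phiA. rewrite (proj_D X x p1 P1). unfold ns, dot, psub; simpl; ring. }
        assert (F2 : phiA X x = 2 * dot x p2 - ns p2).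
        { unfold phiA. rewrite (proj_D X x p2 P2). unfold ns, dot, psub; simpl; ring. }
        assert (F3 : phiA X x = 2 * dot x p3 - ns p3).
        { unfold phiA. rewrite (proj_D X x p3 P3). unfold ns, dot, psub; simpl; ring. }
        pose proof (ident x (xs n) p1 p2 p3 v l1 l2 (phiA X x) F1 F2 F3 Ev) as Id.
        fold w0 in Id.
        pose proof (wterm l1 _ _ H1 (ebound (xs n) x (b1 n) p1)).
        pose proof (wterm l2 _ _ H2 (ebound (xs n) x (b2 n) p2)).
        pose proof (wterm (1 - l1 - l2) _ _ ltac:(lra) (ebound (xs n) x (b3 n) p3)).
        assert (Wt : l1 * (2 * dot (xs n) (b1 n) - ns (b1 n)) + l2 * (2 * dot (xs n) (b2 n) - ns (b2 n))
                  + (1 - l1 - l2) * (2 * dot (xs n) (b3 n) - ns (b3 n)) <= phiA (Xs n) (xs n)).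
        { assert (l1 * (2 * dot (xs n) (b1 n) - ns (b1 n)) <= l1 * phiA (Xs n) (xs n)) by (apply Rmult_le_compat_l; auto).
          assert (l2 * (2 * dot (xs n) (b2 n) - ns (b2 n)) <= l2 * phiA (Xs n) (xs n)) by (apply Rmult_le_compat_l; auto).
          assert ((1 - l1 - l2) * (2 * dot (xs n) (b3 n) - ns (b3 n)) <= (1 - l1 - l2) * phiA (Xs n) (xs n))
            by (apply Rmult_le_compat_l; lra).
          lra. }
        assert (Hga : Psi (Xs n) w0 x - Psi X w0 x <= ga n) by (unfold ga; apply Rle_abs).
        unfold Psi in Hxs, Hga. unfold al, be.
        rewrite <- (norm2_sq (psub (xs n) x)) in Id.
        lra.
      - assert (Lga : is_lim_seq ga 0).
        { unfold ga. apply (lim_abs0 (fun n => Psi (Xs n) w0 x)). unfold Psi. apply is_lim_seq_plus'.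
          apply (pk_phi_sub Xs X x0 Hx0 Hi Hs (fun n => n) (fun _ => x)). apply incr_id. apply cvg_pt_const.
          apply is_lim_seq_const. }
        assert (Lbe : is_lim_seq be 0).
        { unfold be. apply (lim_eq _ (l1 * 0 + l2 * 0 + (1 - l1 - l2) * 0)); [|ring].
          apply is_lim_seq_plus'; [apply is_lim_seq_plus'|]; apply is_lim_seq_mult'; try apply is_lim_seq_const;
          apply (lim_abs0 (fun n => ns (_ n))); apply lim_ns; auto. }
        assert (Lal : is_lim_seq al 0).
        { unfold al. apply (lim_eq _ (l1 * 0 + l2 * 0 + (1 - l1 - l2) * 0)); [|ring].
          apply is_lim_seq_plus'; [apply is_lim_seq_plus'|]; apply is_lim_seq_mult'; try apply is_lim_seq_const;
          apply lim_norm0; auto. }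
        apply (lim_eq _ (0 + 0 + 2 * norm2 x * 0)); [|ring].
        apply is_lim_seq_plus'; [apply is_lim_seq_plus'|]; auto. apply is_lim_seq_mult'; auto. apply is_lim_seq_const.
      - unfold al. apply (lim_eq _ (l1 * 0 + l2 * 0 + (1 - l1 - l2) * 0)); [|ring].
        apply is_lim_seq_plus'; [apply is_lim_seq_plus'|]; apply is_lim_seq_mult'; try apply is_lim_seq_const;
        apply lim_norm0; auto. }
    exists (fun n => (xs n, psub (pscal 3 (xs n)) w0)). split.
    - intros n. unfold graph; simpl. destruct (Hne n) as [a Ha]. apply (key_hard (Xs n) a); auto.
      replace (psub (pscal 2 (xs n)) (psub (pscal 3 (xs n)) w0)) with (psub w0 (xs n)) by pteq. apply HF.
    - split; simpl; auto.
      assert (Ey : y = psub (pscal 3 x) w0) by (unfold w0, v; pteq).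
      rewrite Ey. apply cvg_pt_psub. apply cvg_pt_scal; auto. apply is_lim_seq_const. apply cvg_pt_const. }
  split; intros w; split.
  - intros [u [Hu Hc]]. apply LS. exists (fun k => k), u. split. intros k; lia. split; auto.
  - apply LI.
  - apply LS.
  - intros Hg. destruct (LI w Hg) as [u [Hu Hc]]. exists (fun k => k), u. split. intros k; lia. split; auto.
Qed.
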